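(* Let $|p|<1$ and let $a,b,c,d,q,r,s,t$ be nonzero complex numbers such that all expressions below are well defined. Then for every integer $n\ge0$, \begin{align*} &\sum_{k=0}^n\frac{\theta\big(ad(rst/q)^k,\,br^k/(dq^k),\,cs^k/(dq^k),\,adt^k/(bcq^k);p\big)}{\theta\big(ad,\,b/d,\,c/d,\,ad/(bc);p\big)}\\ &\qquad\times\frac{(a;rst/q^2,p)_k(b;r,p)_k(c;s,p)_k(ad^2/(bc);t,p)_k}{(dq;q,p)_k(adst/(bq);st/q,p)_k(adrt/(cq);rt/q,p)_k(bcrs/(dq);rs/q,p)_k}\,q^k\\ &=\frac{\theta(a,b,c,ad^2/(bc);p)}{d\,\theta(ad,b/d,c/d,ad/(bc);p)}\cdot\frac{(arst/q^2;rst/q^2,p)_n(br;r,p)_n(cs;s,p)_n(ad^2t/(bc);t,p)_n}{(dq;q,p)_n(adst/(bq);st/q,p)_n(adrt/(cq);rt/q,p)_n(bcrs/(dq);rs/q,p)_n}\\ &\quad-\frac{\theta(d,ad/b,ad/c,bc/d;p)}{d\,\theta(ad,b/d,c/d,ad/(bc);p)}. \end{align*}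
   Context: For $|p|<1$ and $x\neq 0$, $\theta(x;p)=(x;p)_\infty(p/x;p)_\infty$ where $(x;p)_\infty=\prod_{k\ge 0}(1-xp^k)$, and $\theta(x_1,\dots,x_m;p)=\prod_{i=1}^m\theta(x_i;p)$. For $a\ne0$ and integer $k\ge0$, $(a;q,p)_k=\prod_{j=0}^{k-1}\theta(aq^j;p)$ (empty product $=1$). Here e.g. $rst/q^2$ denotes $rst/(q^2)$ and $(rst/q)^k=(rst/q)^k$. *)

(* Defs.v *)
From Stdlib Require Import Reals.
From Coquelicot Require Import Coquelicot.

Open Scope C_scope.

Fixpoint qpoch_part (x p : C) (N : nat) : C :=
  match N with
  | O => RtoC 1
  | S N' => qpoch_part x p N' * (RtoC 1 - x * p ^ N')
  end.

Definition qpoch_inf (x p : C) : C :=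
  @lim C_CompleteNormedModule (filtermap (qpoch_part x p) eventually).

Definition theta (x p : C) : C := qpoch_inf x p * qpoch_inf (p / x) p.

Fixpoint ell_poch (a q p : C) (k : nat) : C :=
  match k with
  | O => RtoC 1
  | S k' => ell_poch a q p k' * theta (a * q ^ k') p
  end.

Fixpoint csum (f : nat -> C) (n : nat) : C :=
  match n with
  | O => f O
  | S n' => csum f n' + f n
  end.

(* Main.v *)
Require Import Defs.
From Stdlib Require Import Reals Lra Lia List Permutation ZArith FinFun.
From Coquelicot Require Import Coquelicot.
Open Scope C_scope.

Definition cv (u : nat -> C) (l : C) : Prop :=
  forall eps : R, (0 < eps)%R -> exists N : nat, forall n, (N <= n)%nat -> (Cmod (u n - l) < eps)%R.

Lemma Cmod_sub_sym (x y : C) : Cmod (x - y) = Cmod (y - x).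
Proof. replace (x - y) with (- (y - x)) by ring. apply Cmod_opp. Qed.

Lemma Cmod_tri3 (x y z : C) : (Cmod (x - z) <= Cmod (x - y) + Cmod (y - z))%R.
Proof. replace (x - z) with ((x - y) + (y - z)) by ring. apply Cmod_triangle. Qed.

Lemma cv_const (c : C) : cv (fun _ => c) c.
Proof. intros e He. exists 0%nat. intros. replace (c - c) with (RtoC 0) by ring. rewrite Cmod_0. lra. Qed.

Lemma cv_ext (u v : nat -> C) l : (forall n, u n = v n) -> cv u l -> cv v l.
Proof. intros H Hu e He. destruct (Hu e He) as [N HN]. exists N. intros. rewrite <- H. auto. Qed.

Lemma cv_ext_ev (u v : nat -> C) l K : (forall n, (K <= n)%nat -> u n = v n) -> cv u l -> cv v l.
Proof. intros H Hu e He. destruct (Hu e He) as [N HN]. exists (N + K)%nat. intros. rewrite <- H by lia. apply HN; lia. Qed.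

Lemma cv_plus u v l m : cv u l -> cv v m -> cv (fun n => u n + v n) (l + m).
Proof.
  intros Hu Hv e He. destruct (Hu (e/2)%R) as [N1 H1]; [lra|]. destruct (Hv (e/2)%R) as [N2 H2]; [lra|].
  exists (N1 + N2)%nat. intros n Hn.
  replace (u n + v n - (l + m)) with ((u n - l) + (v n - m)) by ring.
  eapply Rle_lt_trans; [apply Cmod_triangle|]. specialize (H1 n ltac:(lia)). specialize (H2 n ltac:(lia)). lra.
Qed.

Lemma cv_opp u l : cv u l -> cv (fun n => - u n) (- l).
Proof. intros Hu e He. destruct (Hu e He) as [N HN]. exists N. intros n Hn.
  replace (- u n - - l) with (- (u n - l)) by ring. rewrite Cmod_opp. auto. Qed.

Lemma cv_minus u v l m : cv u l -> cv v m -> cv (fun n => u n - v n) (l - m).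
Proof. intros. apply cv_plus; auto. apply cv_opp; auto. Qed.

Lemma cv_bounded u l : cv u l -> exists B, (0 < B)%R /\ forall n, (Cmod (u n) <= B)%R.
Proof.
  intros Hu. destruct (Hu 1%R ltac:(lra)) as [N HN].
  assert (Hfin : (forall K, exists B, 0 < B /\ forall n, (n <= K)%nat -> Cmod (u n) <= B)%R).
  { induction K.
    - exists (Cmod (u 0%nat) + 1)%R. split. pose proof (Cmod_ge_0 (u 0%nat)); lra. intros n Hn. replace n with 0%nat by lia. lra.
    - destruct IHK as [B [HB0 HB]].
      exists (Rmax B (Cmod (u (S K)))). split. eapply Rlt_le_trans; [apply HB0|apply Rmax_l].
      intros n Hn. destruct (Nat.eq_dec n (S K)). subst. apply Rmax_r.
      eapply Rle_trans; [apply HB; lia| apply Rmax_l]. }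
  destruct (Hfin N) as [B [HB0 HB]].
  exists (B + Cmod l + 1)%R. split. pose proof (Cmod_ge_0 l); lra.
  intros n. destruct (le_lt_dec n N). pose proof (HB n l0). pose proof (Cmod_ge_0 l); lra.
  specialize (HN n ltac:(lia)). pose proof (Cmod_tri3 (u n) l 0).
  replace (u n - 0) with (u n) in H by ring. replace (l - 0) with l in H by ring. lra.
Qed.

Lemma cv_mult u v l m : cv u l -> cv v m -> cv (fun n => u n * v n) (l * m).
Proof.
  intros Hu Hv. destruct (cv_bounded v m Hv) as [B [HB0 HB]].
  intros e He.
  set (e1 := (e / (2 * B))%R). set (e2 := (e / (2 * (Cmod l + 1)))%R).
  assert (0 < e1)%R by (unfold e1; apply Rdiv_lt_0_compat; lra).
  assert (0 < e2)%R by (unfold e2; pose proof (Cmod_ge_0 l); apply Rdiv_lt_0_compat; lra).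
  destruct (Hu e1 H) as [N1 H1]. destruct (Hv e2 H0) as [N2 H2].
  exists (N1 + N2)%nat. intros n Hn.
  replace (u n * v n - l * m) with ((u n - l) * v n + l * (v n - m)) by ring.
  eapply Rle_lt_trans; [apply Cmod_triangle|]. rewrite !Cmod_mult.
  specialize (H1 n ltac:(lia)). specialize (H2 n ltac:(lia)). specialize (HB n).
  pose proof (Cmod_ge_0 (u n - l)). pose proof (Cmod_ge_0 l). pose proof (Cmod_ge_0 (v n - m)).
  assert (Cmod (u n - l) * Cmod (v n) <= e1 * B)%R by (apply Rmult_le_compat; try lra; apply Cmod_ge_0).
  assert (Cmod l * Cmod (v n - m) <= (Cmod l + 1) * e2)%R by (apply Rmult_le_compat; lra).
  assert (e1 * B = e/2)%R by (unfold e1; field; lra).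
  assert ((Cmod l + 1) * e2 = e/2)%R by (unfold e2; field; lra).
  assert (Cmod (u n - l) * Cmod (v n) < e1 * B \/ Cmod l * Cmod (v n - m) < (Cmod l + 1) * e2)%R.
  { right. destruct (Req_dec (Cmod l) 0). rewrite H10. nra. apply Rmult_le_0_lt_compat; lra. }
  lra.
Qed.

Lemma cv_scal (c : C) u l : cv u l -> cv (fun n => c * u n) (c * l).
Proof. intros. apply cv_mult; auto. apply cv_const. Qed.

Lemma cv_unique u l m : cv u l -> cv u m -> l = m.
Proof.
  intros Hl Hm. destruct (Ceq_dec l m) as [|Hne]; auto.
  assert (0 < Cmod (l - m))%R by (apply Cmod_gt_0; apply Cminus_eq_contra; auto).
  destruct (Hl (Cmod (l - m) / 2)%R) as [N1 H1]; [lra|]. destruct (Hm (Cmod (l - m) / 2)%R) as [N2 H2]; [lra|].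
  specialize (H1 (N1+N2)%nat ltac:(lia)). specialize (H2 (N1+N2)%nat ltac:(lia)).
  pose proof (Cmod_tri3 l (u (N1+N2)%nat) m). rewrite Cmod_sub_sym in H1. lra.
Qed.

Lemma cv_zero_diff u v l : cv u l -> cv (fun n => v n - u n) 0 -> cv v l.
Proof. intros Hu Hd. apply cv_ext with (fun n => u n + (v n - u n)). intros; ring.
  replace l with (l + 0) by ring. apply cv_plus; auto. Qed.

Lemma cv_Cmod_le u l B : cv u l -> (forall n, Cmod (u n) <= B)%R -> (Cmod l <= B)%R.
Proof.
  intros Hu HB. apply Rnot_lt_le. intro H.
  destruct (Hu (Cmod l - B)%R ltac:(lra)) as [N HN]. specialize (HN N (le_n _)). specialize (HB N).
  pose proof (Cmod_tri3 l (u N) 0). replace (l - 0) with l in H0 by ring. replace (u N - 0) with (u N) in H0 by ring.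
  rewrite Cmod_sub_sym in HN. lra.
Qed.

Lemma cv_Cmod_ge u l B : cv u l -> (forall n, B <= Cmod (u n))%R -> (B <= Cmod l)%R.
Proof.
  intros Hu HB. apply Rnot_lt_le. intro H.
  destruct (Hu (B - Cmod l)%R ltac:(lra)) as [N HN]. specialize (HN N (le_n _)). specialize (HB N).
  pose proof (Cmod_tri3 (u N) l 0). replace (l - 0) with l in H0 by ring. replace (u N - 0) with (u N) in H0 by ring.
  lra.
Qed.

Lemma cv_inv (u : nat -> C) (l : C) : l <> 0 -> cv u l -> cv (fun n => / u n) (/ l).
Proof.
  intros Hl Hu. assert (Hl0 : (0 < Cmod l)%R) by (apply (proj1 (Cmod_gt_0 l)); exact Hl).
  destruct (Hu (Cmod l / 2)%R ltac:(lra)) as [N0 H0].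
  assert (Hb : forall n, (N0 <= n)%nat -> (Cmod l / 2 <= Cmod (u n))%R).
  { intros n Hn. specialize (H0 n Hn). pose proof (Cmod_tri3 l (u n) 0).
    replace (l - 0) with l in H by ring. replace (u n - 0) with (u n) in H by ring. rewrite Cmod_sub_sym in H0. lra. }
  intros e He.
  destruct (Hu (e * (Cmod l * Cmod l / 2))%R) as [N1 H1]. { apply Rmult_lt_0_compat; auto. nra. }
  exists (N0 + N1)%nat. intros n Hn.
  assert (Hun : u n <> 0). { intro Hz. specialize (Hb n ltac:(lia)). rewrite Hz, Cmod_0 in Hb. lra. }
  replace (/ u n - / l) with ((l - u n) * / u n * / l) by (field; auto).
  rewrite !Cmod_mult, !Cmod_inv by auto. rewrite Cmod_sub_sym.
  specialize (H1 n ltac:(lia)). specialize (Hb n ltac:(lia)).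
  assert (0 < Cmod (u n))%R by lra.
  apply (Rmult_lt_reg_r (Cmod (u n) * Cmod l)). nra.
  replace (Cmod (u n - l) * / Cmod (u n) * / Cmod l * (Cmod (u n) * Cmod l))%R with (Cmod (u n - l)) by (field; lra).
  eapply Rlt_le_trans. apply H1. apply Rmult_le_compat_l. lra. nra.
Qed.

Lemma cv_div (u v : nat -> C) (l m : C) : m <> 0 -> cv u l -> cv v m -> cv (fun n => u n / v n) (l / m).
Proof. intros. apply cv_mult; auto. apply cv_inv; auto. Qed.

Lemma cv_shift u l k : cv u l -> cv (fun n => u (n + k)%nat) l.
Proof. intros Hu e He. destruct (Hu e He) as [N HN]. exists N. intros. apply HN. lia. Qed.

Lemma cv_shift_sub u l k : cv u l -> cv (fun n => u (n - k)%nat) l.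
Proof. intros Hu e He. destruct (Hu e He) as [N HN]. exists (N + k)%nat. intros. apply HN. lia. Qed.

Lemma cv_cauchy (u : nat -> C) :
  (forall eps, (0 < eps)%R -> exists N, forall m n, (N <= m)%nat -> (N <= n)%nat -> (Cmod (u m - u n) < eps)%R) ->
  exists l, cv u l.
Proof.
  intros Hc.
  assert (Hsq : (sqrt 2 < 2)%R).
  { assert (sqrt 2 * sqrt 2 = 2)%R by (apply sqrt_sqrt; lra). pose proof (sqrt_pos 2). nra. }
  assert (HR : Cauchy_crit (fun n => fst (u n))).
  { intros e He. destruct (Hc e He) as [N HN]. exists N. intros m n Hm Hn. unfold R_dist.
    eapply Rle_lt_trans; [|apply (HN m n); lia]. eapply Rle_trans; [|apply Rmax_Cmod].
    eapply Rle_trans; [|apply Rmax_l]. simpl. right. f_equal. }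
  assert (HI : Cauchy_crit (fun n => snd (u n))).
  { intros e He. destruct (Hc e He) as [N HN]. exists N. intros m n Hm Hn. unfold R_dist.
    eapply Rle_lt_trans; [|apply (HN m n); lia]. eapply Rle_trans; [|apply Rmax_Cmod].
    eapply Rle_trans; [|apply Rmax_r]. simpl. right. f_equal. }
  destruct (Rcomplete.R_complete _ HR) as [a Ha]. destruct (Rcomplete.R_complete _ HI) as [b Hb].
  exists (a, b). intros e He.
  destruct (Ha (e/2)%R ltac:(lra)) as [N1 H1]. destruct (Hb (e/2)%R ltac:(lra)) as [N2 H2].
  exists (N1 + N2)%nat. intros n Hn. specialize (H1 n ltac:(lia)). specialize (H2 n ltac:(lia)).
  unfold R_dist in *. eapply Rle_lt_trans. apply Cmod_2Rmax.
  assert (Rmax (Rabs (fst (u n - (a, b))%C)) (Rabs (snd (u n - (a, b))%C)) < e / 2)%R.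
  { unfold Rmax. destruct Rle_dec; simpl; unfold Rminus in *; lra. }
  set (M := Rmax _ _) in *. assert (0 <= M)%R by (unfold M; eapply Rle_trans; [apply Rabs_pos|apply Rmax_l]). pose proof (sqrt_pos 2). nra.
Qed.

Lemma lim_of_cv (u : nat -> C) (l : C) : cv u l -> @lim C_CompleteNormedModule (filtermap u eventually) = l.
Proof.
  intros Hu.
  set (F := filtermap u eventually).
  assert (HF : ProperFilter F) by (apply filtermap_proper_filter; apply eventually_filter).
  assert (Hlim : forall P, locally l P -> F P).
  { intros P [e He]. destruct (Hu e (cond_pos e)) as [N HN]. exists N. intros n Hn. apply He.
    apply (@norm_compat1 C_AbsRing C_NormedModule). change (norm (minus (u n) l)) with (Cmod (u n - l)). auto. }
  assert (Hc : @cauchy C_CompleteNormedModule F).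
  { intros e. exists l. apply Hlim. exists e. auto. }
  pose proof (@complete_cauchy C_CompleteNormedModule F HF Hc) as Hcc.
  apply (@is_filter_lim_unique C_AbsRing C_NormedModule F (Proper_StrongProper F HF)).
  - intros P [e He]. eapply filter_imp; [apply He|]. apply Hcc.
  - exact Hlim.
Qed.

Fixpoint sumL {A : Type} (f : A -> C) (l : list A) : C :=
  match l with nil => 0 | x :: l' => f x + sumL f l' end.
Fixpoint rsumL {A : Type} (f : A -> R) (l : list A) : R :=
  match l with nil => 0%R | x :: l' => (f x + rsumL f l')%R end.

Lemma sumL_app {A} (f : A -> C) l1 l2 : sumL f (l1 ++ l2) = sumL f l1 + sumL f l2.
Proof. induction l1; simpl. ring. rewrite IHl1. ring. Qed.
Lemma rsumL_app {A} (f : A -> R) l1 l2 : rsumL f (l1 ++ l2) = (rsumL f l1 + rsumL f l2)%R.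
Proof. induction l1; simpl. ring. rewrite IHl1. ring. Qed.
Lemma sumL_perm {A} (f : A -> C) l1 l2 : Permutation l1 l2 -> sumL f l1 = sumL f l2.
Proof. induction 1; simpl; auto. rewrite IHPermutation; auto. ring. congruence. Qed.
Lemma rsumL_perm {A} (f : A -> R) l1 l2 : Permutation l1 l2 -> rsumL f l1 = rsumL f l2.
Proof. induction 1; simpl; auto. rewrite IHPermutation; auto. ring. congruence. Qed.
Lemma sumL_map {A B} (f : B -> C) (g : A -> B) l : sumL f (map g l) = sumL (fun x => f (g x)) l.
Proof. induction l; simpl; congruence. Qed.
Lemma rsumL_map {A B} (f : B -> R) (g : A -> B) l : rsumL f (map g l) = rsumL (fun x => f (g x)) l.
Proof. induction l; simpl; congruence. Qed.
Lemma sumL_ext {A} (f g : A -> C) l : (forall x, In x l -> f x = g x) -> sumL f l = sumL g l.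
Proof. induction l; simpl; intros; auto. rewrite H, IHl; auto. Qed.
Lemma rsumL_ext {A} (f g : A -> R) l : (forall x, In x l -> f x = g x) -> rsumL f l = rsumL g l.
Proof. induction l; simpl; intros; auto. rewrite H, IHl; auto. Qed.
Lemma sumL_plus {A} (f g : A -> C) l : sumL (fun x => f x + g x) l = sumL f l + sumL g l.
Proof. induction l; simpl. ring. rewrite IHl. ring. Qed.
Lemma sumL_scal {A} (c : C) (f : A -> C) l : sumL (fun x => c * f x) l = c * sumL f l.
Proof. induction l; simpl. ring. rewrite IHl. ring. Qed.
Lemma sumL_opp {A} (f : A -> C) l : sumL (fun x => - f x) l = - sumL f l.
Proof. induction l; simpl. ring. rewrite IHl. ring. Qed.
Lemma sumL_minus {A} (f g : A -> C) l : sumL (fun x => f x - g x) l = sumL f l - sumL g l.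
Proof. induction l; simpl. ring. rewrite IHl. ring. Qed.
Lemma rsumL_minus {A} (f g : A -> R) l : rsumL (fun x => f x - g x)%R l = (rsumL f l - rsumL g l)%R.
Proof. induction l; simpl. ring. rewrite IHl. ring. Qed.
Lemma rsumL_scal {A} (c : R) (f : A -> R) l : rsumL (fun x => c * f x)%R l = (c * rsumL f l)%R.
Proof. induction l; simpl. ring. rewrite IHl. ring. Qed.
Lemma sumL_zero {A} (f : A -> C) l : (forall x, In x l -> f x = 0) -> sumL f l = 0.
Proof. induction l; simpl; intros; auto. rewrite H, IHl; auto. ring. Qed.
Lemma rsumL_nonneg {A} (f : A -> R) l : (forall x, In x l -> 0 <= f x)%R -> (0 <= rsumL f l)%R.
Proof. induction l; simpl; intros. lra. pose proof (H a (or_introl eq_refl)). pose proof (IHl (fun x Hx => H x (or_intror Hx))). lra. Qed.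
Lemma rsumL_le {A} (f g : A -> R) l : (forall x, In x l -> f x <= g x)%R -> (rsumL f l <= rsumL g l)%R.
Proof. induction l; simpl; intros. lra. pose proof (H a (or_introl eq_refl)). pose proof (IHl (fun x Hx => H x (or_intror Hx))). lra. Qed.
Lemma Cmod_sumL {A} (f : A -> C) l : (Cmod (sumL f l) <= rsumL (fun x => Cmod (f x)) l)%R.
Proof. induction l; simpl. rewrite Cmod_0. lra. eapply Rle_trans. apply Cmod_triangle. lra. Qed.

Lemma sumL_prod {A B} (u : A -> C) (v : B -> C) l1 l2 :
  sumL (fun pr => u (fst pr) * v (snd pr)) (list_prod l1 l2) = sumL u l1 * sumL v l2.
Proof.
  induction l1; simpl. ring. rewrite sumL_app, IHl1, sumL_map. simpl. rewrite sumL_scal. ring.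
Qed.
Lemma rsumL_prod {A B} (u : A -> R) (v : B -> R) l1 l2 :
  rsumL (fun pr => u (fst pr) * v (snd pr))%R (list_prod l1 l2) = (rsumL u l1 * rsumL v l2)%R.
Proof.
  induction l1; simpl. ring. rewrite rsumL_app, IHl1, rsumL_map. simpl. rewrite rsumL_scal. ring.
Qed.

Lemma NoDup_list_prod' {A B} (l1 : list A) (l2 : list B) : NoDup l1 -> NoDup l2 -> NoDup (list_prod l1 l2).
Proof.
  induction 1; intros H2; simpl. constructor.
  apply NoDup_app. apply Injective_map_NoDup; auto. intros y1 y2 Hy; congruence.
  apply IHNoDup; auto.
  intros [a b] Ha Hb. apply in_map_iff in Ha. destruct Ha as [y [Hy _]]. inversion Hy; subst.
  apply in_prod_iff in Hb. tauto.
Qed.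

Section Compl.
Context {T : Type} (dec : forall x y : T, {x = y} + {x <> y}).

Lemma perm_compl (A B : list T) : NoDup A -> NoDup B -> incl A B ->
  exists Rl, Permutation B (A ++ Rl) /\ (forall x, In x Rl -> In x B /\ ~ In x A).
Proof.
  intros HA HB Hinc.
  exists (filter (fun x => if in_dec dec x A then false else true) B).
  split.
  - apply NoDup_Permutation; auto.
    + apply NoDup_app; auto. apply NoDup_filter; auto.
      intros a Ha Hb. apply filter_In in Hb. destruct Hb as [_ Hb]. destruct (in_dec dec a A); try discriminate. tauto.
    + intros x. rewrite in_app_iff, filter_In. split.
      * intros Hx. destruct (in_dec dec x A); auto.
      * intros [Hx|[Hx _]]; auto.
  - intros x Hx. apply filter_In in Hx. destruct Hx as [Hx1 Hx2]. destruct (in_dec dec x A); try discriminate. auto.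
Qed.

Lemma sumL_support (f : T -> C) (A B : list T) : NoDup A -> NoDup B -> incl A B ->
  (forall x, In x B -> ~ In x A -> f x = 0) -> sumL f A = sumL f B.
Proof.
  intros HA HB Hinc H0. destruct (perm_compl A B HA HB Hinc) as [Rl [HP HR]].
  rewrite (sumL_perm _ _ _ HP), sumL_app. rewrite (sumL_zero f Rl). ring.
  intros x Hx. apply H0; apply HR; auto.
Qed.

Lemma sumL_incl_bound (f : T -> C) (A B C0 : list T) : NoDup A -> NoDup B -> NoDup C0 -> incl A B -> incl B C0 ->
  (Cmod (sumL f B - sumL f A) <= rsumL (fun x => Cmod (f x)) C0 - rsumL (fun x => Cmod (f x)) A)%R.
Proof.
  intros HA HB HC H1 H2.
  destruct (perm_compl A B HA HB H1) as [R1 [HP1 _]].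
  assert (HBR : NoDup (A ++ R1)) by (eapply Permutation_NoDup; eauto).
  assert (incl (A ++ R1) C0). { intros x Hx. apply H2. eapply Permutation_in. apply Permutation_sym; eauto. auto. }
  destruct (perm_compl (A ++ R1) C0 HBR HC H) as [R2 [HP2 _]].
  rewrite (sumL_perm _ _ _ HP1), sumL_app.
  rewrite (rsumL_perm _ _ _ HP2), !rsumL_app.
  replace (sumL f A + sumL f R1 - sumL f A) with (sumL f R1) by ring.
  eapply Rle_trans. apply Cmod_sumL.
  assert (0 <= rsumL (fun x => Cmod (f x)) R2)%R by (apply rsumL_nonneg; intros; apply Cmod_ge_0).
  lra.
Qed.
End Compl.

Definition zr (M : nat) : list Z := map (fun k => (Z.of_nat k - Z.of_nat M)%Z) (seq 0 (2 * M + 1)).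

Lemma In_zr M j : In j (zr M) <-> (- Z.of_nat M <= j <= Z.of_nat M)%Z.
Proof.
  unfold zr. rewrite in_map_iff. split.
  - intros [k [Hk Hin]]. apply in_seq in Hin. lia.
  - intros H. exists (Z.to_nat (j + Z.of_nat M)). split. lia. apply in_seq. lia.
Qed.

Lemma NoDup_zr M : NoDup (zr M).
Proof. unfold zr. apply Injective_map_NoDup. intros a b H; lia. apply seq_NoDup. Qed.

Lemma zr_incl M N : (M <= N)%nat -> incl (zr M) (zr N).
Proof. intros H x Hx. apply In_zr in Hx. apply In_zr. lia. Qed.

Lemma zr_S M : Permutation (zr (S M)) ((- Z.of_nat (S M))%Z :: Z.of_nat (S M) :: zr M).
Proof.
  apply NoDup_Permutation. apply NoDup_zr.
  constructor. intros [H|H]. lia. apply In_zr in H; lia.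
  constructor. intros H. apply In_zr in H; lia. apply NoDup_zr.
  intros x. cbn [In]. rewrite !In_zr. lia.
Qed.

Definition zps (f : Z -> C) (M : nat) : C := sumL f (zr M).
Definition rzps (f : Z -> R) (M : nat) : R := rsumL f (zr M).

Lemma zps_S f M : zps f (S M) = zps f M + f (- Z.of_nat (S M))%Z + f (Z.of_nat (S M)).
Proof. unfold zps. rewrite (sumL_perm _ _ _ (zr_S M)). simpl. ring. Qed.
Lemma rzps_S f M : rzps f (S M) = (rzps f M + f (- Z.of_nat (S M))%Z + f (Z.of_nat (S M)))%R.
Proof. unfold rzps. rewrite (rsumL_perm _ _ _ (zr_S M)). simpl. ring. Qed.

Definition zbounded (b : Z -> R) : Prop :=
  (forall j, 0 <= b j)%R /\ exists B, forall M, (rzps b M <= B)%R.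

Lemma rzps_mono (b : Z -> R) : (forall j, 0 <= b j)%R -> forall M N, (M <= N)%nat -> (rzps b M <= rzps b N)%R.
Proof.
  intros Hb M N H. induction H. lra. rewrite rzps_S. pose proof (Hb (- Z.of_nat (S m))%Z). pose proof (Hb (Z.of_nat (S m))). lra.
Qed.

Lemma rzps_cauchy (b : Z -> R) : zbounded b -> forall eps, (0 < eps)%R -> exists K, forall N, (K <= N)%nat -> (rzps b N - rzps b K < eps)%R.
Proof.
  intros [Hb [B HB]] eps He.
  destruct (growing_cv (rzps b)) as [L HL].
  { intros n. apply rzps_mono; auto. }
  { exists B. intros x [n Hn]. subst. auto. }
  destruct (HL (eps/2)%R ltac:(lra)) as [K HK]. exists K. intros N HN.
  pose proof (HK N HN). pose proof (HK K (le_n _)). unfold R_dist in *.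
  apply Rabs_def2 in H. apply Rabs_def2 in H0. lra.
Qed.

Lemma zps_diff_bound (f : Z -> C) (b : Z -> R) : (forall j, Cmod (f j) <= b j)%R ->
  forall M N, (M <= N)%nat -> (Cmod (zps f N - zps f M) <= rzps b N - rzps b M)%R.
Proof.
  intros Hf M N H. induction H. replace (zps f M - zps f M) with (RtoC 0) by ring. rewrite Cmod_0. lra.
  rewrite zps_S, rzps_S.
  replace (zps f m + f (- Z.of_nat (S m))%Z + f (Z.of_nat (S m)) - zps f M) with
    ((zps f m - zps f M) + f (- Z.of_nat (S m))%Z + f (Z.of_nat (S m))) by ring.
  eapply Rle_trans. apply Cmod_triangle. eapply Rle_trans. apply Rplus_le_compat_r. apply Cmod_triangle.
  pose proof (Hf (- Z.of_nat (S m))%Z). pose proof (Hf (Z.of_nat (S m))). lra.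
Qed.

Lemma zconv (f : Z -> C) (b : Z -> R) : (forall j, Cmod (f j) <= b j)%R -> zbounded b -> exists l, cv (zps f) l.
Proof.
  intros Hf Hb. apply cv_cauchy. intros eps He.
  destruct (rzps_cauchy b Hb (eps/2)%R ltac:(lra)) as [K HK]. exists K. intros m n Hm Hn.
  pose proof (zps_diff_bound f b Hf K m Hm). pose proof (zps_diff_bound f b Hf K n Hn).
  pose proof (HK m Hm). pose proof (HK n Hn).
  pose proof (Cmod_tri3 (zps f m) (zps f K) (zps f n)). rewrite (Cmod_sub_sym (zps f K) (zps f n)) in H3. lra.
Qed.

Lemma cv_sumL {A} (h : nat -> A -> C) (hl : A -> C) (L : list A) :
  (forall x, In x L -> cv (fun N => h N x) (hl x)) -> cv (fun N => sumL (h N) L) (sumL hl L).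
Proof.
  induction L; simpl; intros H. apply cv_const.
  apply cv_plus. apply H; auto. apply IHL. intros; apply H; auto.
Qed.

Lemma tannery (g : nat -> Z -> C) (f : Z -> C) (b : Z -> R) (l : C) :
  (forall j, cv (fun N => g N j) (f j)) -> (forall N j, Cmod (g N j) <= b j)%R -> zbounded b ->
  cv (zps f) l -> cv (fun N => zps (g N) N) l.
Proof.
  intros Hg Hgb Hb Hf eps He.
  assert (Hfb : forall j, (Cmod (f j) <= b j)%R). { intros j. apply (cv_Cmod_le (fun N => g N j)); auto. }
  destruct (rzps_cauchy b Hb (eps/4)%R ltac:(lra)) as [K HK].
  destruct (Hf (eps/4)%R ltac:(lra)) as [N1 HN1].
  assert (Hfin : cv (fun N => zps (g N) K) (zps f K)). { apply cv_sumL. intros; apply Hg. }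
  destruct (Hfin (eps/4)%R ltac:(lra)) as [N2 HN2].
  exists (K + N1 + N2)%nat. intros N HN.
  pose proof (zps_diff_bound (g N) b (Hgb N) K N ltac:(lia)).
  pose proof (zps_diff_bound f b Hfb K N ltac:(lia)).
  pose proof (HK N ltac:(lia)). pose proof (HN1 N ltac:(lia)). pose proof (HN2 N ltac:(lia)).
  replace (zps (g N) N - l) with ((zps (g N) N - zps (g N) K) - (zps f N - zps f K) + (zps (g N) K - zps f K) + (zps f N - l)) by ring.
  eapply Rle_lt_trans. apply Cmod_triangle. eapply Rle_lt_trans. apply Rplus_le_compat_r. apply Cmod_triangle.
  eapply Rle_lt_trans. apply Rplus_le_compat_r. apply Rplus_le_compat_r.
  unfold Cminus at 1. eapply Rle_trans. apply Cmod_triangle. rewrite Cmod_opp. apply Rle_refl.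
  lra.
Qed.

Definition Zsum (f : Z -> C) : C := @lim C_CompleteNormedModule (filtermap (zps f) eventually).

Lemma Zsum_cv (f : Z -> C) (l : C) : cv (zps f) l -> Zsum f = l.
Proof. apply lim_of_cv. Qed.

Lemma Zsum_cv' (f : Z -> C) (b : Z -> R) : (forall j, Cmod (f j) <= b j)%R -> zbounded b -> cv (zps f) (Zsum f).
Proof. intros. destruct (zconv f b H H0) as [l Hl]. rewrite (Zsum_cv f l Hl). auto. Qed.
Implicit Types z w : C.

Lemma Cpow_mul (z w : C) (n : nat) : (z * w) ^ n = z ^ n * w ^ n.
Proof. induction n; simpl. ring. rewrite IHn. ring. Qed.
Lemma Cpow_add (z : C) (a b : nat) : z ^ (a + b) = z ^ a * z ^ b.
Proof. induction a; simpl. ring. rewrite IHa. ring. Qed.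
Lemma Cpow_neq0 (z : C) (n : nat) : z <> 0 -> z ^ n <> 0.
Proof. intros H. induction n; simpl. intro H1. injection H1. lra. apply Cmult_neq_0; auto. Qed.
Lemma Cpow_inv (z : C) (n : nat) : z <> 0 -> (/ z) ^ n = / z ^ n.
Proof. intros H. induction n; simpl. field. rewrite IHn. field. split; auto. apply Cpow_neq0; auto. Qed.
Lemma Cpow_div (z w : C) (n : nat) : w <> 0 -> (z / w) ^ n = z ^ n / w ^ n.
Proof. intros H. unfold Cdiv. rewrite Cpow_mul, Cpow_inv; auto. Qed.

Lemma Cinv_neq0 (z : C) : z <> 0 -> / z <> 0.
Proof. intros H H1. assert (z * / z = 1) by (apply Cinv_r; auto). rewrite H1 in H0.
  replace (z * 0) with (RtoC 0) in H0 by ring. injection H0. lra. Qed.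
Lemma Cdiv_neq0 (a b : C) : a <> 0 -> b <> 0 -> a / b <> 0.
Proof. intros. unfold Cdiv. apply Cmult_neq_0; auto. apply Cinv_neq0; auto. Qed.
Lemma Cpow_one (n : nat) : (RtoC 1) ^ n = 1.
Proof. induction n; simpl. auto. rewrite IHn. ring. Qed.

Definition Zpow (z : C) (k : Z) : C := z ^ Z.to_nat k / z ^ Z.to_nat (- k).

Lemma Zpow_neq0 z k : z <> 0 -> Zpow z k <> 0.
Proof. intros H. unfold Zpow. apply Cdiv_neq0; apply Cpow_neq0; auto. Qed.

Lemma Zpow_nat z (n : nat) : Zpow z (Z.of_nat n) = z ^ n.
Proof. unfold Zpow. rewrite Nat2Z.id. replace (Z.to_nat (- Z.of_nat n)) with 0%nat by lia. simpl. field. Qed.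

Lemma Zpow_0 z : Zpow z 0 = 1.
Proof. apply (Zpow_nat z 0). Qed.
Lemma Zpow_1 z : Zpow z 1 = z.
Proof. change 1%Z with (Z.of_nat 1). rewrite (Zpow_nat z 1). simpl. ring. Qed.

Lemma pow_ratio (z : C) (a b c d : nat) : z <> 0 -> (a + d = c + b)%nat -> z ^ a / z ^ b = z ^ c / z ^ d.
Proof.
  intros Hz H. assert (z ^ b <> 0) by (apply Cpow_neq0; auto). assert (z ^ d <> 0) by (apply Cpow_neq0; auto).
  transitivity (z ^ (a + d) / (z ^ b * z ^ d)). rewrite Cpow_add. field; auto.
  rewrite H, Cpow_add. field; auto.
Qed.

Lemma Zpow_add z a b : z <> 0 -> Zpow z (a + b) = Zpow z a * Zpow z b.
Proof.
  intros Hz. unfold Zpow.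
  assert (z ^ Z.to_nat (- a) <> 0) by (apply Cpow_neq0; auto). assert (z ^ Z.to_nat (- b) <> 0) by (apply Cpow_neq0; auto).
  replace (z ^ Z.to_nat a / z ^ Z.to_nat (- a) * (z ^ Z.to_nat b / z ^ Z.to_nat (- b)))
    with (z ^ (Z.to_nat a + Z.to_nat b) / z ^ (Z.to_nat (- a) + Z.to_nat (-b))) by (rewrite !Cpow_add; field; auto).
  apply pow_ratio; auto. lia.
Qed.

Lemma Zpow_opp z k : z <> 0 -> Zpow z (- k) = / Zpow z k.
Proof. intros Hz. unfold Zpow. rewrite Z.opp_involutive. field. split; apply Cpow_neq0; auto. Qed.

Lemma Zpow_sub z a b : z <> 0 -> Zpow z (a - b) = Zpow z a / Zpow z b.
Proof. intros. unfold Z.sub. rewrite Zpow_add, Zpow_opp; auto. Qed.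

Lemma Zpow_mul_base z w k : z <> 0 -> w <> 0 -> Zpow (z * w) k = Zpow z k * Zpow w k.
Proof. intros. unfold Zpow. rewrite !Cpow_mul. field. repeat split; apply Cpow_neq0; auto. Qed.

Lemma Zpow_inv_base z k : z <> 0 -> Zpow (/ z) k = / Zpow z k.
Proof. intros. unfold Zpow. rewrite !Cpow_inv; auto. field. split; apply Cpow_neq0; auto. Qed.

Lemma Zpow_div_base z w k : z <> 0 -> w <> 0 -> Zpow (z / w) k = Zpow z k / Zpow w k.
Proof. intros. unfold Cdiv. rewrite Zpow_mul_base, Zpow_inv_base; auto. apply Cinv_neq0; auto. Qed.

Lemma m1_neq0 : (-1 : C) <> 0.
Proof. intro H. injection H. lra. Qed.

Lemma Zpow_m1_S k : Zpow (-1) (k + 1) = - Zpow (-1) k.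
Proof. rewrite Zpow_add, Zpow_1. ring. apply m1_neq0. Qed.

Lemma Zpow_m1_sq k : Zpow (-1) k * Zpow (-1) k = 1.
Proof. rewrite <- Zpow_mul_base by apply m1_neq0. replace (-1 * -1) with (RtoC 1) by ring.
  unfold Zpow. rewrite !Cpow_one. field. Qed.

Lemma Zpow_m1_double k : Zpow (-1) (k + k) = 1.
Proof. rewrite Zpow_add by apply m1_neq0. apply Zpow_m1_sq. Qed.

Fixpoint gtri (k : nat) : nat := match k with 0%nat => 0%nat | S k' => (gtri k' + k')%nat end.
Lemma gtri_spec k : (2 * Z.of_nat (gtri k) = Z.of_nat k * (Z.of_nat k - 1))%Z.
Proof. induction k; simpl gtri. reflexivity. rewrite Nat2Z.inj_add. lia. Qed.

Definition tri (j : Z) : nat :=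
  if (0 <=? j)%Z then gtri (Z.to_nat j) else (gtri (Z.to_nat (- j)) + Z.to_nat (- j))%nat.
Lemma tri_spec j : (2 * Z.of_nat (tri j) = j * (j - 1))%Z.
Proof.
  unfold tri. destruct (Z.leb_spec 0 j).
  - rewrite gtri_spec. rewrite Z2Nat.id by lia. ring.
  - rewrite Nat2Z.inj_add. pose proof (gtri_spec (Z.to_nat (- j))). rewrite Z2Nat.id in * by lia. lia.
Qed.
Lemma tri_ge j : (gtri (Z.abs_nat j) <= tri j)%nat.
Proof.
  pose proof (tri_spec j). pose proof (gtri_spec (Z.abs_nat j)). rewrite Zabs2Nat.id_abs in H0.
  destruct (Z.abs_spec j) as [[H1 H2]|[H1 H2]]; rewrite H2 in H0; nia.
Qed.

Definition aco (p : C) (j : Z) : C := Zpow (-1) j * p ^ tri j.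

Lemma pow_anti (r : R) (a b : nat) : (0 <= r <= 1)%R -> (a <= b)%nat -> (r ^ b <= r ^ a)%R.
Proof.
  intros Hr H. induction H. lra. simpl. eapply Rle_trans; [|apply IHle].
  pose proof (pow_le r m (proj1 Hr)). nra.
Qed.

Lemma Cmod_Zpow_le z j : z <> 0 -> (Cmod (Zpow z j) <= Rmax (Cmod z) (/ Cmod z) ^ Z.abs_nat j)%R.
Proof.
  intros Hz. assert (0 < Cmod z)%R by (apply Cmod_gt_0; auto). unfold Zpow.
  destruct (Z.leb_spec 0 j).
  - replace (Z.to_nat (- j)) with 0%nat by lia. replace (Z.abs_nat j) with (Z.to_nat j) by lia.
    simpl. replace (z ^ Z.to_nat j / 1) with (z ^ Z.to_nat j) by field. rewrite Cmod_pow.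
    apply pow_incr. split. lra. apply Rmax_l.
  - replace (Z.to_nat j) with 0%nat by lia. replace (Z.abs_nat j) with (Z.to_nat (- j)) by lia.
    simpl. unfold Cdiv. rewrite Cmult_1_l. rewrite Cmod_inv by (apply Cpow_neq0; auto). rewrite Cmod_pow.
    rewrite <- pow_inv. apply pow_incr. split. left. apply Rinv_0_lt_compat; auto. apply Rmax_r.
Qed.

Fixpoint rS (w : nat -> R) (n : nat) : R := match n with 0%nat => 0%R | S n' => (rS w n' + w n')%R end.

Lemma rS_mono (w : nat -> R) : (forall k, 0 <= w k)%R -> forall a b, (a <= b)%nat -> (rS w a <= rS w b)%R.
Proof. intros Hw a b H. induction H. lra. simpl. pose proof (Hw m). lra. Qed.

Lemma geom_tail_bound (w : nat -> R) (K : nat) : (forall k, 0 <= w k)%R ->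
  (forall k, (K <= k)%nat -> 2 * w (S k) <= w k)%R -> forall n, (rS w n <= rS w K + 2 * w K)%R.
Proof.
  intros Hw Hk n. destruct (le_lt_dec n K).
  - pose proof (rS_mono w Hw n K l). pose proof (Hw K). lra.
  - assert (forall m, rS w (K + m)%nat + 2 * w (K + m)%nat <= rS w K + 2 * w K)%R.
    { induction m. rewrite Nat.add_0_r. lra. replace (K + S m)%nat with (S (K + m)) by lia. simpl.
      pose proof (Hk (K + m)%nat ltac:(lia)). lra. }
    specialize (H (n - K)%nat). replace (K + (n - K))%nat with n in H by lia. pose proof (Hw n). lra.
Qed.

Lemma rzps_abs (w : nat -> R) M : (forall k, 0 <= w k)%R -> (rzps (fun j => w (Z.abs_nat j)) M <= 2 * rS w (S M))%R.
Proof.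
  intros Hw. induction M.
  - unfold rzps, zr. simpl. pose proof (Hw 0%nat). lra.
  - rewrite rzps_S. replace (Z.abs_nat (- Z.of_nat (S M))) with (S M) by lia. replace (Z.abs_nat (Z.of_nat (S M))) with (S M) by lia.
    simpl rS at 1. simpl in IHM. lra.
Qed.

Lemma gauss_zb (r Rr : R) : (0 <= r < 1)%R -> (0 < Rr)%R ->
  zbounded (fun j => r ^ gtri (Z.abs_nat j) * Rr ^ Z.abs_nat j)%R.
Proof.
  intros Hr HR. set (w := fun k => (r ^ gtri k * Rr ^ k)%R).
  assert (Hw : forall k, (0 <= w k)%R). { intros. unfold w. apply Rmult_le_pos; apply pow_le; lra. }
  split. intros j. apply Hw.
  destruct (pow_lt_1_zero r ltac:(rewrite Rabs_pos_eq; lra) (/ (2 * Rr))%R) as [K HK].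
  { apply Rinv_0_lt_compat; lra. }
  assert (Hk : forall k, (K <= k)%nat -> (2 * w (S k) <= w k)%R).
  { intros k Hk. specialize (HK k Hk). rewrite Rabs_pos_eq in HK by (apply pow_le; lra).
    unfold w. simpl. rewrite pow_add.
    assert (0 <= r ^ gtri k * Rr ^ k)%R by (apply Rmult_le_pos; apply pow_le; lra).
    assert (r ^ k * Rr * 2 <= 1)%R.
    { apply (Rmult_lt_compat_r (2 * Rr)) in HK; [|lra]. rewrite Rinv_l in HK by lra. lra. }
    nra. }
  exists (2 * (rS w K + 2 * w K))%R. intros M.
  eapply Rle_trans. apply (rzps_abs w M Hw). pose proof (geom_tail_bound w K Hw Hk (S M)). lra.
Qed.

Lemma zbounded_le (b c : Z -> R) : (forall j, 0 <= c j <= b j)%R -> zbounded b -> zbounded c.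
Proof.
  intros H [Hb [B HB]]. split. intros; apply H. exists B. intros M. eapply Rle_trans; [|apply (HB M)].
  apply rsumL_le. intros; apply H.
Qed.

Lemma fam_zb (p z : C) (e : Z -> nat) (s : Z -> C) : (Cmod p < 1)%R -> z <> 0 ->
  (forall j, gtri (Z.abs_nat j) <= e j)%nat -> (forall j, Cmod (s j) = 1%R) ->
  zbounded (fun j => Cmod (s j * p ^ e j * Zpow z j)).
Proof.
  intros Hp Hz He Hs.
  apply (zbounded_le (fun j => Cmod p ^ gtri (Z.abs_nat j) * Rmax (Cmod z) (/ Cmod z) ^ Z.abs_nat j)%R).
  - intros j. split. apply Cmod_ge_0. rewrite !Cmod_mult, Hs, Cmod_pow, Rmult_1_l.
    apply Rmult_le_compat. apply pow_le, Cmod_ge_0. apply Cmod_ge_0.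
    apply pow_anti; auto. split. apply Cmod_ge_0. lra. apply Cmod_Zpow_le; auto.
  - apply gauss_zb. split. apply Cmod_ge_0. auto.
    assert (0 < Cmod z)%R by (apply Cmod_gt_0; auto). eapply Rlt_le_trans; [apply H|apply Rmax_l].
Qed.

Lemma Cmod_m1pow j : Cmod (Zpow (-1) j) = 1%R.
Proof. unfold Zpow. rewrite Cmod_div by (apply Cpow_neq0, m1_neq0). rewrite !Cmod_pow.
  replace (Cmod (-1)) with 1%R. rewrite !pow1. field. unfold Cmod. simpl. replace (_ + _)%R with 1%R by ring. rewrite sqrt_1. auto. Qed.

Lemma exp_ge_1plus (y : R) : (0 <= y)%R -> (1 + y <= exp y)%R.
Proof. intros H. destruct (Req_dec y 0). subst. rewrite exp_0. lra. left. apply exp_ineq1. auto. Qed.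

Lemma exp_le_exp_ (a b : R) : (a <= b)%R -> (exp a <= exp b)%R.
Proof. intros [H|H]. left. apply exp_increasing; auto. subst. lra. Qed.

Lemma Cmod_1_minus_le (w : C) : (Cmod (1 - w) <= 1 + Cmod w)%R.
Proof. unfold Cminus. eapply Rle_trans. apply Cmod_triangle. rewrite Cmod_opp, Cmod_1. lra. Qed.
Lemma Cmod_1_minus_ge (w : C) : (1 - Cmod w <= Cmod (1 - w))%R.
Proof. pose proof (Cmod_tri3 1 (1 - w) 0). replace (1 - (1 - w)) with w in H by ring.
  replace (1 - 0) with (RtoC 1) in H by ring. replace (1 - w - 0) with (1 - w) in H by ring. rewrite Cmod_1 in H. lra. Qed.

Section Conv.
Variables (x p : C).
Hypothesis Hp : (Cmod p < 1)%R.
Let r := Cmod p.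
Let X := Cmod x.

Lemma r_ge0 : (0 <= r)%R. Proof. apply Cmod_ge_0. Qed.

Lemma part_bound_aux N : (Cmod (qpoch_part x p N) <= exp (X * (1 - r ^ N) / (1 - r)))%R.
Proof.
  pose proof r_ge0. assert (0 <= X)%R by apply Cmod_ge_0. fold r in Hp.
  induction N; simpl qpoch_part.
  - simpl. replace (X * (1 - 1) / (1 - r))%R with 0%R by (field; lra). rewrite exp_0, Cmod_1. lra.
  - rewrite Cmod_mult. eapply Rle_trans. apply Rmult_le_compat. apply Cmod_ge_0. apply Cmod_ge_0. apply IHN.
    eapply Rle_trans. apply Cmod_1_minus_le. rewrite Cmod_mult, Cmod_pow. fold r X. apply exp_ge_1plus.
    apply Rmult_le_pos; auto. apply pow_le; auto.
    rewrite <- exp_plus. apply exp_le_exp_. right. simpl. field. lra.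
Qed.

Definition pbound := exp (X / (1 - r)).

Lemma part_bound N : (Cmod (qpoch_part x p N) <= pbound)%R.
Proof.
  pose proof r_ge0. assert (0 <= X)%R by apply Cmod_ge_0. fold r in Hp.
  eapply Rle_trans. apply part_bound_aux. unfold pbound. apply exp_le_exp_.
  unfold Rdiv. apply Rmult_le_compat_r. left; apply Rinv_0_lt_compat; lra.
  pose proof (pow_le r N H). nra.
Qed.

Lemma part_diff n k : (Cmod (qpoch_part x p (n + k) - qpoch_part x p n) <= pbound * X * r ^ n * (1 - r ^ k) / (1 - r))%R.
Proof.
  pose proof r_ge0. assert (0 <= X)%R by apply Cmod_ge_0. fold r in Hp.
  induction k.
  - rewrite Nat.add_0_r. replace (qpoch_part x p n - qpoch_part x p n) with (RtoC 0) by ring. rewrite Cmod_0.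
    simpl. replace (pbound * X * r ^ n * (1 - 1) / (1 - r))%R with 0%R by (field; lra). lra.
  - replace (n + S k)%nat with (S (n + k)) by lia. simpl qpoch_part.
    replace (qpoch_part x p (n + k) * (1 - x * p ^ (n + k)) - qpoch_part x p n) with
      ((qpoch_part x p (n + k) - qpoch_part x p n) - qpoch_part x p (n + k) * (x * p ^ (n + k))) by ring.
    unfold Cminus at 1. eapply Rle_trans. apply Cmod_triangle. rewrite Cmod_opp, !Cmod_mult, Cmod_pow. fold r X.
    assert (Hb2 : (Cmod (qpoch_part x p (n + k)) * (X * r ^ (n + k)) <= pbound * (X * r ^ (n + k)))%R).
    { apply Rmult_le_compat_r. apply Rmult_le_pos; auto. apply pow_le; auto. apply part_bound. }
    rewrite pow_add in *. 
    replace (pbound * X * r ^ n * (1 - r ^ S k) / (1 - r))%R with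
      (pbound * X * r ^ n * (1 - r ^ k) / (1 - r) + pbound * (X * (r ^ n * r ^ k)))%R by (simpl; field; lra).
    lra.
Qed.

Lemma part_cv : exists l, cv (qpoch_part x p) l.
Proof.
  pose proof r_ge0. assert (0 <= X)%R by apply Cmod_ge_0. fold r in Hp.
  assert (Hpb : (0 < pbound)%R) by apply exp_pos.
  apply cv_cauchy. intros eps He.
  destruct (pow_lt_1_zero r ltac:(rewrite Rabs_pos_eq; lra) (eps * (1 - r) / (2 * (pbound * X + 1)))%R) as [N HN].
  { apply Rdiv_lt_0_compat. nra. nra. }
  exists N. intros m n Hm Hn.
  assert (Hgen : forall k, (N <= k)%nat -> (Cmod (qpoch_part x p k - qpoch_part x p N) < eps / 2)%R).
  { intros k Hk. replace k with (N + (k - N))%nat by lia. eapply Rle_lt_trans. apply part_diff.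
    specialize (HN N (le_n _)). rewrite Rabs_pos_eq in HN by (apply pow_le; auto).
    pose proof (pow_le r (k - N) H). pose proof (pow_le r N H).
    apply (Rmult_lt_compat_l (pbound * X + 1)) in HN; [|nra].
    replace ((pbound * X + 1) * (eps * (1 - r) / (2 * (pbound * X + 1))))%R with (eps * (1 - r) / 2)%R in HN by (field; nra).
    apply (Rmult_lt_reg_r (1 - r)). lra.
    replace (pbound * X * r ^ N * (1 - r ^ (k - N)) / (1 - r) * (1 - r))%R with (pbound * X * r ^ N * (1 - r ^ (k - N)))%R by (field; lra).
    assert (pbound * X * r ^ N * (1 - r ^ (k - N)) <= pbound * X * r ^ N)%R.
    { assert (0 <= pbound * X * r ^ N)%R by (apply Rmult_le_pos; [apply Rmult_le_pos|]; lra). nra. }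
    nra. }
  pose proof (Hgen m Hm). pose proof (Hgen n Hn).
  pose proof (Cmod_tri3 (qpoch_part x p m) (qpoch_part x p N) (qpoch_part x p n)) as Htri.
  rewrite (Cmod_sub_sym (qpoch_part x p N)) in Htri. lra.
Qed.

Lemma qpoch_cv : cv (qpoch_part x p) (qpoch_inf x p).
Proof. destruct part_cv as [l Hl]. unfold qpoch_inf. rewrite (lim_of_cv _ l Hl). auto. Qed.

End Conv.

Definition PN (x p : C) (N : nat) : C := qpoch_part x p N * qpoch_part (p / x) p N.

Lemma theta_cv x p : (Cmod p < 1)%R -> cv (PN x p) (theta x p).
Proof. intros Hp. unfold PN, theta. apply cv_mult; apply qpoch_cv; auto. Qed.

Fixpoint rprod (r : R) (N : nat) : R := match N with 0%nat => 1%R | S N' => (rprod r N' * (1 - r ^ S N'))%R end.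

Lemma powS_lt1 (r : R) (n : nat) : (0 <= r < 1)%R -> (r ^ S n < 1)%R.
Proof. intros. apply pow_lt_1_compat. auto. lia. Qed.

Lemma pow_le1 (r : R) (n : nat) : (0 <= r <= 1)%R -> (r ^ n <= 1)%R.
Proof. intros H. induction n; simpl. lra. pose proof (pow_le r n (proj1 H)). nra. Qed.

Lemma rprod_pos r N : (0 <= r < 1)%R -> (0 < rprod r N)%R.
Proof. intros Hr. induction N; simpl rprod. lra. apply Rmult_lt_0_compat; auto.
  assert (r ^ S N < 1)%R. { apply powS_lt1; split; lra. } simpl in *. lra. Qed.

Lemma rprod_le_pp p N : (Cmod p < 1)%R -> (rprod (Cmod p) N <= Cmod (qpoch_part p p N))%R.
Proof.
  intros Hp. pose proof (Cmod_ge_0 p). induction N; simpl. rewrite Cmod_1. lra.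
  rewrite Cmod_mult. apply Rmult_le_compat. left; apply rprod_pos; lra.
  assert (Cmod p ^ S N < 1)%R by (apply powS_lt1; split; lra). simpl in H0. lra.
  auto. eapply Rle_trans; [|apply Cmod_1_minus_ge]. rewrite Cmod_mult, Cmod_pow. simpl. lra.
Qed.

Lemma rprod_lower r : (0 <= r < 1)%R -> exists d, (0 < d)%R /\ forall N, (d <= rprod r N)%R.
Proof.
  intros Hr.
  destruct (pow_lt_1_zero r ltac:(rewrite Rabs_pos_eq; lra) ((1 - r) / 2)%R) as [K HK]. lra.
  specialize (HK K (le_n _)). rewrite Rabs_pos_eq in HK by (apply pow_le; lra).
  exists (rprod r K / 2)%R. split. pose proof (rprod_pos r K Hr). lra.
  assert (HW : forall m, (rprod r K * (1 - r ^ (S K) * (1 - r ^ m) / (1 - r)) <= rprod r (K + m))%R).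
  { induction m.
    - rewrite Nat.add_0_r. simpl. replace (1 - r * r ^ K * (1 - 1) / (1 - r))%R with 1%R by (field; lra). lra.
    - replace (K + S m)%nat with (S (K + m)) by lia. change (rprod r (S (K + m))) with (rprod r (K + m) * (1 - r ^ S (K + m)))%R.
      pose proof (rprod_pos r K Hr). pose proof (pow_le r m (proj1 Hr)). pose proof (pow_le r K (proj1 Hr)).
      assert (r ^ S (K + m) < 1)%R by (apply powS_lt1; split; lra).
      assert (r ^ S (K + m) = r ^ S K * r ^ m)%R by (rewrite <- pow_add; f_equal; lia).
      assert (0 <= r ^ S K * (1 - r ^ m) / (1 - r))%R.
      { apply Rmult_le_pos. apply Rmult_le_pos. simpl; nra. assert (r ^ m <= 1)%R by (apply pow_le1; split; lra). lra.
        left; apply Rinv_0_lt_compat; lra. }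
      assert (0 <= r ^ S (K + m))%R by (apply pow_le; lra).
      replace (1 - r ^ S K * (1 - r ^ S m) / (1 - r))%R with
        ((1 - r ^ S K * (1 - r ^ m) / (1 - r)) - r ^ S (K + m))%R by (rewrite H3; simpl; field; lra).
      apply Rle_trans with (rprod r K * (1 - r ^ S K * (1 - r ^ m) / (1 - r)) * (1 - r ^ S (K + m)))%R.
      + assert (0 <= rprod r K * (r ^ S K * (1 - r ^ m) / (1 - r)) * r ^ S (K + m))%R by (apply Rmult_le_pos; [apply Rmult_le_pos|]; lra). nra.
      + apply Rmult_le_compat_r. lra. auto. }
  intros N. destruct (le_lt_dec N K).
  - assert (forall j, rprod r (N + j) <= rprod r N)%R.
    { induction j. rewrite Nat.add_0_r. lra. replace (N + S j)%nat with (S (N + j)) by lia.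
      change (rprod r (S (N + j))) with (rprod r (N + j) * (1 - r ^ S (N + j)))%R.
      pose proof (rprod_pos r (N + j) Hr) as Ha. pose proof (pow_le r (S (N + j)) (proj1 Hr)) as Hb.
      assert (r ^ S (N + j) < 1)%R by (apply powS_lt1; split; lra). nra. }
    specialize (H (K - N)%nat). replace (N + (K - N))%nat with K in H by lia. pose proof (rprod_pos r K Hr). lra.
  - specialize (HW (N - K)%nat). replace (K + (N - K))%nat with N in HW by lia.
    pose proof (rprod_pos r K Hr). pose proof (pow_le r (N - K) (proj1 Hr)).
    assert (r ^ (N - K) <= 1)%R by (apply pow_le1; split; lra).
    assert (r ^ S K * (1 - r ^ (N - K)) / (1 - r) <= 1 / 2)%R.
    { simpl. apply (Rmult_le_reg_r (1 - r)). lra. unfold Rdiv. rewrite Rmult_assoc, Rinv_l by lra.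
      pose proof (pow_le r K (proj1 Hr)). assert (0 <= r * (1 - r ^ (N - K)) <= 1)%R by (split; nra). replace (r * r ^ K * (1 - r ^ (N - K)) * 1)%R with (r ^ K * (r * (1 - r ^ (N - K))))%R by ring. nra. }
    nra.
Qed.

Lemma pp_lim_neq0 p : (Cmod p < 1)%R -> qpoch_inf p p <> 0.
Proof.
  intros Hp. destruct (rprod_lower (Cmod p)) as [d [Hd HdN]]. split; auto. apply Cmod_ge_0.
  intros H0. assert (d <= Cmod (qpoch_inf p p))%R.
  { apply (cv_Cmod_ge (qpoch_part p p)). apply qpoch_cv; auto. intros n. eapply Rle_trans. apply HdN. apply rprod_le_pp; auto. }
  rewrite H0, Cmod_0 in H. lra.
Qed.

Lemma pp_neq0 p N : (Cmod p < 1)%R -> qpoch_part p p N <> 0.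
Proof.
  intros Hp H0. pose proof (rprod_le_pp p N Hp). rewrite H0, Cmod_0 in H.
  pose proof (rprod_pos (Cmod p) N). pose proof (Cmod_ge_0 p). lra.
Qed.

Lemma Cpow_Cmod_lt1 (p : C) (k : nat) : (Cmod p < 1)%R -> p ^ S k <> 1.
Proof.
  intros Hp H. assert (Cmod (p ^ S k) = 1%R) by (rewrite H; apply Cmod_1).
  rewrite Cmod_pow in H0. pose proof (Cmod_ge_0 p).
  assert (Cmod p ^ S k < 1)%R by (apply pow_lt_1_compat; [split; lra|lia]). lra.
Qed.

Section JTP.
Variable p : C.
Hypothesis Hp : (Cmod p < 1)%R.

Definition pp (k : nat) : C := qpoch_part p p k.
Definition ipp (k : Z) : C := if (k <? 0)%Z then 0 else / pp (Z.to_nat k).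

Lemma pp_S k : pp (S k) = pp k * (1 - p ^ S k).
Proof. unfold pp. simpl. auto. Qed.

Lemma pp_nz k : pp k <> 0.
Proof. apply pp_neq0; auto. Qed.

Lemma one_minus_pow_nz k : 1 - p ^ S k <> 0.
Proof. intros H. apply (Cpow_Cmod_lt1 p k Hp). apply Ceq_minus in H. auto. Qed.

Lemma ipp_neg (k : Z) : (k < 0)%Z -> ipp k = 0.
Proof. intros. unfold ipp. destruct (Z.ltb_spec k 0); auto. lia. Qed.

Lemma ipp_nat (k : nat) : ipp (Z.of_nat k) = / pp k.
Proof. unfold ipp. destruct (Z.ltb_spec (Z.of_nat k) 0). lia. rewrite Nat2Z.id. auto. Qed.

Lemma ipp_step (z : Z) (k : nat) : z = (Z.of_nat k - 1)%Z -> ipp z = ipp (Z.of_nat k) * (1 - p ^ k).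
Proof.
  intros ->. destruct k.
  - simpl. rewrite ipp_neg by lia. ring.
  - replace (Z.of_nat (S k) - 1)%Z with (Z.of_nat k) by lia. rewrite !ipp_nat, pp_S.
    field. split. apply one_minus_pow_nz. apply pp_nz.
Qed.

Lemma ipp_step2 (z : Z) (k : nat) : z = (Z.of_nat k - 2)%Z -> ipp z = ipp (Z.of_nat k) * (1 - p ^ k) * (1 - p ^ (k - 1)).
Proof.
  intros ->. destruct k.
  - simpl. rewrite ipp_neg by lia. ring.
  - rewrite (ipp_step _ k) by lia. rewrite (ipp_step (Z.of_nat k) (S k)) by lia.
    replace (S k - 1)%nat with k by lia. ring.
Qed.

Lemma ipp_eq (z : Z) (k : nat) : z = Z.of_nat k -> ipp z = ipp (Z.of_nat k).
Proof. intros ->; auto. Qed.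

Definition cN (N : nat) (j : Z) : C := aco p j * pp (2 * N) * ipp (Z.of_nat N + j) * ipp (Z.of_nat N - j).

Lemma aco_L1 (N : nat) (j : Z) : (j <= Z.of_nat N + 1)%Z ->
  p ^ N * aco p (j - 1) = - (p ^ Z.to_nat (Z.of_nat N + 1 - j) * aco p j).
Proof.
  intros H. unfold aco.
  replace (Zpow (-1) j) with (Zpow (-1) ((j - 1) + 1)) by (f_equal; ring). rewrite Zpow_m1_S.
  assert (E : (N + tri (j - 1) = Z.to_nat (Z.of_nat N + 1 - j) + tri j)%nat).
  { pose proof (tri_spec (j - 1)). pose proof (tri_spec j). nia. }
  replace (p ^ N * (Zpow (-1) (j - 1) * p ^ tri (j - 1))) with (Zpow (-1) (j - 1) * p ^ (N + tri (j - 1))) by (rewrite Cpow_add; ring).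
  rewrite E, Cpow_add. ring.
Qed.

Lemma aco_L2 (N : nat) (j : Z) : (- (Z.of_nat N) - 1 <= j)%Z ->
  p ^ S N * aco p (j + 1) = - (p ^ Z.to_nat (Z.of_nat N + 1 + j) * aco p j).
Proof.
  intros H. unfold aco. rewrite Zpow_m1_S.
  assert (E : (S N + tri (j + 1) = Z.to_nat (Z.of_nat N + 1 + j) + tri j)%nat).
  { pose proof (tri_spec (j + 1)). pose proof (tri_spec j). nia. }
  replace (p ^ S N * (- Zpow (-1) j * p ^ tri (j + 1))) with (- (Zpow (-1) j * p ^ (S N + tri (j + 1)))) by (rewrite Cpow_add; ring).
  rewrite E, Cpow_add. ring.
Qed.

Lemma core_id (k1 k2 N : nat) : (k1 + k2 = 2 * N + 2)%nat ->
  (1 - p ^ (2 * N + 1)) * (1 - p ^ (2 * N + 2)) =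
  (1 + p ^ (2 * N + 1)) * (1 - p ^ k1) * (1 - p ^ k2) + p ^ k2 * (1 - p ^ k1) * (1 - p ^ (k1 - 1))
  + p ^ k1 * (1 - p ^ k2) * (1 - p ^ (k2 - 1)).
Proof.
  intros H. destruct k1 as [|a].
  - assert (k2 = 2 * N + 2)%nat by lia. subst k2. replace (2 * N + 2 - 1)%nat with (2 * N + 1)%nat by lia.
    replace (p ^ 0) with (RtoC 1) by reflexivity. ring.
  - destruct k2 as [|b].
    + assert (S a = 2 * N + 2)%nat by lia. rewrite H0. replace (2 * N + 2 - 1)%nat with (2 * N + 1)%nat by lia.
      replace (p ^ 0) with (RtoC 1) by reflexivity. ring.
    + replace (S a - 1)%nat with a by lia. replace (S b - 1)%nat with b by lia.
      replace (2 * N + 1)%nat with (1 + (a + b))%nat by lia. replace (2 * N + 2)%nat with (2 + (a + b))%nat by lia.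
      replace (S a) with (1 + a)%nat by lia. replace (S b) with (1 + b)%nat by lia.
      rewrite !Cpow_add. replace (p ^ 1) with p by (simpl; ring). replace (p ^ 2) with (p * p) by (simpl; ring). ring.
Qed.

Lemma cN_rec (N : nat) (j : Z) : (- Z.of_nat (S N) <= j <= Z.of_nat (S N))%Z ->
  cN (S N) j = (1 + p ^ (2 * N + 1)) * cN N j - p ^ N * cN N (j - 1) - p ^ S N * cN N (j + 1).
Proof.
  intros Hj. rewrite Nat2Z.inj_succ in Hj.
  set (k1 := Z.to_nat (Z.of_nat N + 1 + j)). set (k2 := Z.to_nat (Z.of_nat N + 1 - j)).
  assert (Hk : (k1 + k2 = 2 * N + 2)%nat) by (unfold k1, k2; lia).
  unfold cN.
  rewrite (ipp_eq (Z.of_nat (S N) + j) k1) by (unfold k1; lia).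
  rewrite (ipp_eq (Z.of_nat (S N) - j) k2) by (unfold k2; lia).
  rewrite (ipp_step (Z.of_nat N + j) k1) by (unfold k1; lia).
  rewrite (ipp_step (Z.of_nat N - j) k2) by (unfold k2; lia).
  rewrite (ipp_step2 (Z.of_nat N + (j - 1)) k1) by (unfold k1; lia).
  rewrite (ipp_eq (Z.of_nat N - (j - 1)) k2) by (unfold k2; lia).
  rewrite (ipp_eq (Z.of_nat N + (j + 1)) k1) by (unfold k1; lia).
  rewrite (ipp_step2 (Z.of_nat N - (j + 1)) k2) by (unfold k2; lia).
  replace (p ^ N * (aco p (j - 1) * pp (2 * N) * (ipp (Z.of_nat k1) * (1 - p ^ k1) * (1 - p ^ (k1 - 1))) * ipp (Z.of_nat k2)))
    with ((p ^ N * aco p (j - 1)) * pp (2 * N) * (ipp (Z.of_nat k1) * (1 - p ^ k1) * (1 - p ^ (k1 - 1))) * ipp (Z.of_nat k2)) by ring.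
  replace (p ^ S N * (aco p (j + 1) * pp (2 * N) * ipp (Z.of_nat k1) * (ipp (Z.of_nat k2) * (1 - p ^ k2) * (1 - p ^ (k2 - 1)))))
    with ((p ^ S N * aco p (j + 1)) * pp (2 * N) * ipp (Z.of_nat k1) * (ipp (Z.of_nat k2) * (1 - p ^ k2) * (1 - p ^ (k2 - 1)))) by ring.
  rewrite aco_L1 by lia. rewrite aco_L2 by lia. fold k1 k2.
  replace (2 * S N)%nat with (S (S (2 * N))) by lia. rewrite !pp_S.
  replace (S (2 * N)) with (2 * N + 1)%nat by lia. replace (S (2 * N + 1)) with (2 * N + 2)%nat by lia.
  pose proof (core_id k1 k2 N Hk) as Hc.
  transitivity (aco p j * pp (2 * N) * ipp (Z.of_nat k1) * ipp (Z.of_nat k2) * ((1 - p ^ (2 * N + 1)) * (1 - p ^ (2 * N + 2)))).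
  ring. rewrite Hc. ring.
Qed.

Lemma cN_out (N : nat) (j : Z) : (j < - Z.of_nat N \/ Z.of_nat N < j)%Z -> cN N j = 0.
Proof.
  intros H. unfold cN. destruct H.
  rewrite (ipp_neg (Z.of_nat N + j)) by lia. ring.
  rewrite (ipp_neg (Z.of_nat N - j)) by lia. ring.
Qed.

Lemma cN_0 : cN 0 0 = 1.
Proof. unfold cN. simpl. unfold aco, ipp. simpl. rewrite Zpow_0. unfold pp. simpl. field. Qed.

Lemma sum_shift_up (N : nat) (h : Z -> C) :
  (forall j, (j < - Z.of_nat N \/ Z.of_nat N < j)%Z -> h j = 0) ->
  sumL (fun j => h (j - 1)%Z) (zr (S N)) = sumL h (zr N).
Proof.
  intros H0.
  transitivity (sumL (fun j => h (j - 1)%Z) (map (fun j => j + 1)%Z (zr N))).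
  - symmetry. apply sumL_support. apply Z.eq_dec.
    apply Injective_map_NoDup. intros a b Hab; lia. apply NoDup_zr. apply NoDup_zr.
    intros y Hy. apply in_map_iff in Hy. destruct Hy as [x [<- Hx]]. apply In_zr in Hx. apply In_zr. lia.
    intros y Hy Hn. apply H0. destruct (Z_lt_le_dec (y - 1) (- Z.of_nat N)). left; auto.
    destruct (Z_lt_le_dec (Z.of_nat N) (y - 1)). right; auto. exfalso. apply Hn. apply in_map_iff. exists (y - 1)%Z. split. ring. apply In_zr. lia.
  - rewrite sumL_map. apply sumL_ext. intros. f_equal. ring.
Qed.

Lemma sum_shift_down (N : nat) (h : Z -> C) :
  (forall j, (j < - Z.of_nat N \/ Z.of_nat N < j)%Z -> h j = 0) ->
  sumL (fun j => h (j + 1)%Z) (zr (S N)) = sumL h (zr N).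
Proof.
  intros H0.
  transitivity (sumL (fun j => h (j + 1)%Z) (map (fun j => j - 1)%Z (zr N))).
  - symmetry. apply sumL_support. apply Z.eq_dec.
    apply Injective_map_NoDup. intros a b Hab; lia. apply NoDup_zr. apply NoDup_zr.
    intros y Hy. apply in_map_iff in Hy. destruct Hy as [x [<- Hx]]. apply In_zr in Hx. apply In_zr. lia.
    intros y Hy Hn. apply H0. destruct (Z_lt_le_dec (y + 1) (- Z.of_nat N)). left; auto.
    destruct (Z_lt_le_dec (Z.of_nat N) (y + 1)). right; auto. exfalso. apply Hn. apply in_map_iff. exists (y + 1)%Z. split. ring. apply In_zr. lia.
  - rewrite sumL_map. apply sumL_ext. intros. f_equal. ring.
Qed.

Lemma sum_extend (N : nat) (h : Z -> C) :
  (forall j, (j < - Z.of_nat N \/ Z.of_nat N < j)%Z -> h j = 0) ->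
  sumL h (zr (S N)) = sumL h (zr N).
Proof.
  intros H0. symmetry. apply sumL_support. apply Z.eq_dec. apply NoDup_zr. apply NoDup_zr. apply zr_incl; lia.
  intros y Hy Hn. apply H0. rewrite In_zr in Hn. lia.
Qed.

Lemma finite_jtp (x : C) (N : nat) : x <> 0 -> PN x p N = sumL (fun j => cN N j * Zpow x j) (zr N).
Proof.
  intros Hx. induction N.
  - unfold PN, zr. simpl. rewrite cN_0, Zpow_0. ring.
  - assert (HPS : PN x p (S N) = PN x p N * ((1 + p ^ (2 * N + 1)) - p ^ N * x - p ^ S N * / x)).
    { unfold PN. simpl qpoch_part. replace (2 * N + 1)%nat with (N + N + 1)%nat by lia. rewrite !Cpow_add. simpl. field. auto. }
    rewrite HPS, IHN.
    assert (Hout : forall j, (j < - Z.of_nat N \/ Z.of_nat N < j)%Z -> cN N j * Zpow x j = 0).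
    { intros j Hj. rewrite cN_out; auto. ring. }
    assert (E1 : sumL (fun j => cN N j * Zpow x j) (zr N) * x = sumL (fun j => cN N (j - 1) * Zpow x j) (zr (S N))).
    { transitivity (sumL (fun j => cN N j * Zpow x (j + 1)) (zr N)).
      { rewrite Cmult_comm, <- sumL_scal. apply sumL_ext. intros. rewrite Zpow_add, Zpow_1 by auto. ring. }
      rewrite <- (sum_shift_up N (fun j => cN N j * Zpow x (j + 1))) by (intros; rewrite cN_out; auto; ring).
      apply sumL_ext. intros. replace (x0 - 1 + 1)%Z with x0 by ring. auto. }
    assert (E2 : sumL (fun j => cN N j * Zpow x j) (zr N) * / x = sumL (fun j => cN N (j + 1) * Zpow x j) (zr (S N))).
    { transitivity (sumL (fun j => cN N j * Zpow x (j - 1)) (zr N)).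
      { rewrite Cmult_comm, <- sumL_scal. apply sumL_ext. intros. rewrite Zpow_sub, Zpow_1 by auto. unfold Cdiv. ring. }
      rewrite <- (sum_shift_down N (fun j => cN N j * Zpow x (j - 1))) by (intros; rewrite cN_out; auto; ring).
      apply sumL_ext. intros. replace (x0 + 1 - 1)%Z with x0 by ring. auto. }
    assert (E0 : sumL (fun j => cN N j * Zpow x j) (zr N) = sumL (fun j => cN N j * Zpow x j) (zr (S N))).
    { symmetry. apply sum_extend. auto. }
    transitivity (sumL (fun j => (1 + p ^ (2 * N + 1)) * (cN N j * Zpow x j) - p ^ N * (cN N (j - 1) * Zpow x j)
       - p ^ S N * (cN N (j + 1) * Zpow x j)) (zr (S N))).
    + rewrite !sumL_minus, !sumL_scal, <- E0, <- E1, <- E2. ring.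
    + apply sumL_ext. intros j Hj. rewrite cN_rec by (apply In_zr; auto). ring.
Qed.

End JTP.

Lemma cv_zshift (u : nat -> C) (l : C) (j : Z) : cv u l -> cv (fun N => u (Z.to_nat (Z.of_nat N + j))) l.
Proof. intros Hu e He. destruct (Hu e He) as [K HK]. exists (K + Z.to_nat (Z.abs j))%nat. intros n Hn. apply HK. lia. Qed.

Lemma cv_double (u : nat -> C) (l : C) : cv u l -> cv (fun N => u (2 * N)%nat) l.
Proof. intros Hu e He. destruct (Hu e He) as [K HK]. exists K. intros n Hn. apply HK. lia. Qed.

Lemma zbounded_scal (c : R) (b : Z -> R) : (0 <= c)%R -> zbounded b -> zbounded (fun j => c * b j)%R.
Proof.
  intros Hc [Hb [B HB]]. split. intros. apply Rmult_le_pos; auto. exists (c * B)%R. intros M.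
  unfold rzps. rewrite rsumL_scal. apply Rmult_le_compat_l; auto. apply HB.
Qed.

Lemma mult4_le (a b c e A B C0 E : R) : (0 <= a <= A -> 0 <= b <= B -> 0 <= c <= C0 -> 0 <= e <= E ->
  a * b * c * e <= A * B * C0 * E)%R.
Proof.
  intros [Ha HA] [Hb HB] [Hc HC] [He HE].
  apply Rmult_le_compat; try lra. apply Rmult_le_pos; [apply Rmult_le_pos|]; lra.
  apply Rmult_le_compat; try lra. apply Rmult_le_pos; lra.
  apply Rmult_le_compat; lra.
Qed.

Definition Tser (p x : C) : C := Zsum (fun j => aco p j * Zpow x j).

Lemma aco_zb (p x : C) : (Cmod p < 1)%R -> x <> 0 -> zbounded (fun j => Cmod (aco p j * Zpow x j)).
Proof.
  intros Hp Hx. unfold aco.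
  apply (fam_zb p x tri (fun j => Zpow (-1) j)); auto. apply tri_ge. apply Cmod_m1pow.
Qed.

Lemma Tser_cv (p x : C) : (Cmod p < 1)%R -> x <> 0 -> cv (zps (fun j => aco p j * Zpow x j)) (Tser p x).
Proof. intros. apply (Zsum_cv' _ (fun j => Cmod (aco p j * Zpow x j))). intros; lra. apply aco_zb; auto. Qed.

Section ThetaT.
Variable p : C.
Hypothesis Hp : (Cmod p < 1)%R.

Let L := qpoch_inf p p.

Lemma ipp_bound : exists d, (0 < d)%R /\ forall k, (Cmod (ipp p k) <= / d)%R.
Proof.
  destruct (rprod_lower (Cmod p)) as [d [Hd HdN]]. split. apply Cmod_ge_0. auto.
  exists d. split; auto. intros k. unfold ipp. destruct (k <? 0)%Z. rewrite Cmod_0. left. apply Rinv_0_lt_compat; auto.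
  rewrite Cmod_inv by (apply pp_nz; auto). apply Rinv_le_contravar; auto.
  eapply Rle_trans. apply HdN. apply rprod_le_pp; auto.
Qed.

Lemma ipp_cv (j : Z) : cv (fun N => ipp p (Z.of_nat N + j)) (/ L).
Proof.
  apply (cv_ext_ev (fun N => / pp p (Z.to_nat (Z.of_nat N + j))) _ _ (Z.to_nat (Z.abs j))).
  - intros n Hn. unfold ipp. destruct (Z.ltb_spec (Z.of_nat n + j) 0). lia. auto.
  - apply cv_inv. apply pp_lim_neq0; auto. apply cv_zshift. apply qpoch_cv; auto.
Qed.

Theorem theta_T (x : C) : x <> 0 -> theta x p = Tser p x / L.
Proof.
  intros Hx.
  destruct ipp_bound as [d [Hd Hipp]].
  set (U := pbound p p).
  assert (HU : forall N, (Cmod (pp p N) <= U)%R) by (intros; apply part_bound; auto).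
  assert (HU0 : (0 <= U)%R) by (unfold U, pbound; left; apply exp_pos).
  set (g := fun (N : nat) (j : Z) => aco p j * (pp p N * pp p N * ipp p (Z.of_nat N + j) * ipp p (Z.of_nat N - j)) * Zpow x j).
  set (c0 := fun N => pp p (2 * N) / (pp p N * pp p N)).
  assert (HPN : forall N, PN x p N = c0 N * zps (g N) N).
  { intros N. rewrite finite_jtp by auto. unfold zps. rewrite <- sumL_scal. apply sumL_ext. intros j _.
    unfold c0, g, cN. field. apply pp_nz; auto. }
  assert (Hg : cv (fun N => zps (g N) N) (Tser p x)).
  { apply (tannery g (fun j => aco p j * Zpow x j) (fun j => (U * U * / d * / d) * Cmod (aco p j * Zpow x j))%R).
    - intros j. unfold g. replace (aco p j * Zpow x j) with (aco p j * (L * L * / L * / L) * Zpow x j).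
      apply cv_mult; [|apply cv_const]. apply cv_mult; [apply cv_const|].
      apply cv_mult. apply cv_mult. apply cv_mult; apply qpoch_cv; auto. apply ipp_cv.
      replace (Z.of_nat 0) with 0%Z by auto.
      apply (cv_ext (fun N => ipp p (Z.of_nat N + - j))). intros; f_equal; ring. apply ipp_cv.
      field. apply pp_lim_neq0; auto.
    - intros N j. unfold g. rewrite !Cmod_mult.
      replace (Cmod (aco p j * Zpow x j)) with (Cmod (aco p j) * Cmod (Zpow x j))%R by (rewrite Cmod_mult; auto).
      pose proof (Cmod_ge_0 (aco p j)). pose proof (Cmod_ge_0 (Zpow x j)).
      assert (Cmod (pp p N) * Cmod (pp p N) * Cmod (ipp p (Z.of_nat N + j)) * Cmod (ipp p (Z.of_nat N - j)) <= U * U * / d * / d)%R.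
      { apply mult4_le; split; try apply Cmod_ge_0; auto. }
      assert (0 <= Cmod (aco p j) * Cmod (Zpow x j))%R by (apply Rmult_le_pos; auto).
      nra.
    - apply zbounded_scal. apply Rmult_le_pos. apply Rmult_le_pos. apply Rmult_le_pos; auto.
      left; apply Rinv_0_lt_compat; auto. left; apply Rinv_0_lt_compat; auto. apply aco_zb; auto.
    - apply Tser_cv; auto. }
  assert (Hc0 : cv c0 (/ L)).
  { unfold c0. replace (/ L) with (L / (L * L)) by (field; apply pp_lim_neq0; auto).
    apply cv_div. apply Cmult_neq_0; apply pp_lim_neq0; auto. apply cv_double, qpoch_cv; auto.
    apply cv_mult; apply qpoch_cv; auto. }
  apply (cv_unique (PN x p)). apply theta_cv; auto.
  apply (cv_ext (fun N => c0 N * zps (g N) N)). intros; auto.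
  replace (Tser p x / L) with (/ L * Tser p x) by (unfold Cdiv; ring). apply cv_mult; auto.
Qed.
End ThetaT.

Definition Kser (p z : C) : C := Zsum (fun j => p ^ Z.to_nat (j * j + j) * Zpow z j).
Definition Gser (p z : C) : C := Zsum (fun j => p ^ Z.to_nat (j * j) * Zpow z j).

Lemma Cmod_one : Cmod 1 = 1%R. Proof. apply Cmod_1. Qed.

Lemma Kser_cv p z : (Cmod p < 1)%R -> z <> 0 -> cv (zps (fun j => p ^ Z.to_nat (j * j + j) * Zpow z j)) (Kser p z).
Proof.
  intros Hp Hz. apply (Zsum_cv' _ (fun j => Cmod (1 * p ^ Z.to_nat (j * j + j) * Zpow z j))).
  intros j. rewrite Cmult_1_l. lra.
  apply (fam_zb p z (fun j => Z.to_nat (j * j + j)) (fun _ => 1)); auto.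
  intros j. pose proof (gtri_spec (Z.abs_nat j)). rewrite Zabs2Nat.id_abs in H.
  destruct (Z.abs_spec j) as [[H1 H2]|[H1 H2]]; rewrite H2 in H; nia.
  intros; apply Cmod_1.
Qed.

Lemma Gser_cv p z : (Cmod p < 1)%R -> z <> 0 -> cv (zps (fun j => p ^ Z.to_nat (j * j) * Zpow z j)) (Gser p z).
Proof.
  intros Hp Hz. apply (Zsum_cv' _ (fun j => Cmod (1 * p ^ Z.to_nat (j * j) * Zpow z j))).
  intros j. rewrite Cmult_1_l. lra.
  apply (fam_zb p z (fun j => Z.to_nat (j * j)) (fun _ => 1)); auto.
  intros j. pose proof (gtri_spec (Z.abs_nat j)). rewrite Zabs2Nat.id_abs in H.
  destruct (Z.abs_spec j) as [[H1 H2]|[H1 H2]]; rewrite H2 in H; nia.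
  intros; apply Cmod_1.
Qed.

Lemma cv_S (u : nat -> C) l : cv u l -> cv (fun n => u (S n)) l.
Proof. intros Hu e He. destruct (Hu e He) as [N HN]. exists N. intros. apply HN. lia. Qed.

Definition box (M : nat) : list (Z * Z) := list_prod (zr M) (zr M).

Lemma In_box M m n : In (m, n) (box M) <-> (- Z.of_nat M <= m <= Z.of_nat M /\ - Z.of_nat M <= n <= Z.of_nat M)%Z.
Proof. unfold box. rewrite in_prod_iff, !In_zr. tauto. Qed.

Lemma NoDup_box M : NoDup (box M).
Proof. apply NoDup_list_prod'; apply NoDup_zr. Qed.

Definition phi1 (pr : Z * Z) : Z * Z := (fst pr + snd pr + 1, fst pr - snd pr + 1)%Z.
Definition phi2 (pr : Z * Z) : Z * Z := (fst pr + snd pr + 1, fst pr - snd pr)%Z.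

Definition Lp (M : nat) := map phi1 (box (S M)) ++ map phi2 (box (S M)).

Lemma pair_dec : forall x y : Z * Z, {x = y} + {x <> y}.
Proof. intros [a b] [c d]. destruct (Z.eq_dec a c); destruct (Z.eq_dec b d); subst; auto; right; congruence. Qed.

Lemma NoDup_Lp M : NoDup (Lp M).
Proof.
  unfold Lp. apply NoDup_app.
  - apply Injective_map_NoDup. intros [a b] [c d] H. unfold phi1 in H. simpl in H. injection H; intros. f_equal; lia. apply NoDup_box.
  - apply Injective_map_NoDup. intros [a b] [c d] H. unfold phi2 in H. simpl in H. injection H; intros. f_equal; lia. apply NoDup_box.
  - intros x H1 H2. apply in_map_iff in H1. apply in_map_iff in H2.
    destruct H1 as [[a b] [E1 _]]. destruct H2 as [[c d] [E2 _]]. subst x. unfold phi1, phi2 in E2. simpl in E2.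
    injection E2; intros; lia.
Qed.

Lemma incl_box_Lp M : incl (box M) (Lp M).
Proof.
  intros [m n] H. apply In_box in H. unfold Lp. apply in_or_app.
  destruct (Z.Even_or_Odd (m - n)) as [[k Hk]|[k Hk]].
  - left. apply in_map_iff. exists (n + k - 1, k)%Z. split. unfold phi1; simpl. f_equal; lia.
    apply In_box. lia.
  - right. apply in_map_iff. exists (n + k, k)%Z. split. unfold phi2; simpl. f_equal; lia.
    apply In_box. lia.
Qed.

Lemma incl_Lp_box M : incl (Lp M) (box (2 * M + 3)).
Proof.
  intros x H. unfold Lp in H. apply in_app_or in H. destruct H as [H|H]; apply in_map_iff in H;
  destruct H as [[a b] [<- Hab]]; apply In_box in Hab; unfold phi1, phi2; simpl; apply In_box; lia.
Qed.

Section PF.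
Variables (p al be : C).
Hypotheses (Hp : (Cmod p < 1)%R) (Hal : al <> 0) (Hbe : be <> 0).

Let u := fun m => aco p m * Zpow al m.
Let v := fun n => aco p n * Zpow be n.
Let k1 := fun i => p ^ Z.to_nat (i * i + i) * Zpow (al * be) i.
Let h1 := fun j => p ^ Z.to_nat (j * j) * Zpow (al / be) j.
Let k2 := fun i => p ^ Z.to_nat (i * i) * Zpow (al * be) i.
Let h2 := fun j => p ^ Z.to_nat (j * j + j) * Zpow (al / be) j.
Let f := fun pr : Z * Z => u (fst pr) * v (snd pr).

Lemma P1 i j : al * be * (k1 i * h1 j) = f (phi1 (i, j)).
Proof.
  unfold f, phi1, u, v, k1, h1, aco. simpl.
  assert (Hs : Zpow (-1) (i + j + 1) * Zpow (-1) (i - j + 1) = 1).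
  { rewrite <- Zpow_add by apply m1_neq0. replace (i + j + 1 + (i - j + 1))%Z with ((i + 1) + (i + 1))%Z by ring. apply Zpow_m1_double. }
  assert (He : (tri (i + j + 1) + tri (i - j + 1) = Z.to_nat (i * i + i) + Z.to_nat (j * j))%nat).
  { pose proof (tri_spec (i + j + 1)). pose proof (tri_spec (i - j + 1)). nia. }
  rewrite Zpow_mul_base, Zpow_div_base by auto.
  rewrite (Zpow_add al (i + j) 1), (Zpow_add al i j), (Zpow_add be (i - j) 1), (Zpow_sub be i j), !Zpow_1 by auto.
  assert (Zpow be j <> 0) by (apply Zpow_neq0; auto).
  transitivity ((Zpow (-1) (i + j + 1) * Zpow (-1) (i - j + 1)) * p ^ (tri (i + j + 1) + tri (i - j + 1))
     * (Zpow al i * Zpow al j * al) * (Zpow be i / Zpow be j * be)).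
  - rewrite Hs, He, Cpow_add. field. auto.
  - rewrite Cpow_add. ring.
Qed.

Lemma P2 i j : - al * (k2 i * h2 j) = f (phi2 (i, j)).
Proof.
  unfold f, phi2, u, v, k2, h2, aco. simpl.
  assert (Hs : Zpow (-1) (i + j + 1) * Zpow (-1) (i - j) = -1).
  { rewrite <- Zpow_add by apply m1_neq0. replace (i + j + 1 + (i - j))%Z with ((i + i) + 1)%Z by ring.
    rewrite Zpow_m1_S, Zpow_m1_double. ring. }
  assert (He : (tri (i + j + 1) + tri (i - j) = Z.to_nat (i * i) + Z.to_nat (j * j + j))%nat).
  { pose proof (tri_spec (i + j + 1)). pose proof (tri_spec (i - j)). nia. }
  rewrite Zpow_mul_base, Zpow_div_base by auto.
  rewrite (Zpow_add al (i + j) 1), (Zpow_add al i j), (Zpow_sub be i j), !Zpow_1 by auto.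
  assert (Zpow be j <> 0) by (apply Zpow_neq0; auto).
  transitivity ((Zpow (-1) (i + j + 1) * Zpow (-1) (i - j)) * p ^ (tri (i + j + 1) + tri (i - j))
     * (Zpow al i * Zpow al j * al) * (Zpow be i / Zpow be j)).
  - rewrite Hs, He, Cpow_add. field. auto.
  - rewrite Cpow_add. ring.
Qed.

Lemma R_eq M : al * be * (zps k1 (S M) * zps h1 (S M)) - al * (zps k2 (S M) * zps h2 (S M)) = sumL f (Lp M).
Proof.
  unfold zps. rewrite <- !sumL_prod. unfold Lp. rewrite sumL_app, !sumL_map. fold (box (S M)).
  unfold Cminus. rewrite <- !sumL_scal. rewrite <- sumL_opp. f_equal; apply sumL_ext; intros [i j] _; simpl.
  apply P1. rewrite <- P2. ring.
Qed.

Lemma S_eq M : zps u M * zps v M = sumL f (box M).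
Proof. unfold zps, box. rewrite <- sumL_prod. auto. Qed.

Lemma abs_eq K : rsumL (fun x => Cmod (f x)) (box K) = (rzps (fun m => Cmod (u m)) K * rzps (fun n => Cmod (v n)) K)%R.
Proof. unfold box, rzps. rewrite <- rsumL_prod. apply rsumL_ext. intros. unfold f. apply Cmod_mult. Qed.

Theorem PF : Tser p al * Tser p be = al * be * Kser p (al * be) * Gser p (al / be) - al * Gser p (al * be) * Kser p (al / be).
Proof.
  assert (Hab : al * be <> 0) by (apply Cmult_neq_0; auto).
  assert (Hdb : al / be <> 0) by (apply Cdiv_neq0; auto).
  assert (HS : cv (fun M => zps u M * zps v M) (Tser p al * Tser p be)) by (apply cv_mult; apply Tser_cv; auto).
  assert (HR : cv (fun M => al * be * (zps k1 (S M) * zps h1 (S M)) - al * (zps k2 (S M) * zps h2 (S M)))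
                  (al * be * Kser p (al * be) * Gser p (al / be) - al * Gser p (al * be) * Kser p (al / be))).
  { replace (al * be * Kser p (al * be) * Gser p (al / be) - al * Gser p (al * be) * Kser p (al / be))
      with (al * be * (Kser p (al * be) * Gser p (al / be)) - al * (Gser p (al * be) * Kser p (al / be))) by ring.
    apply cv_minus; apply cv_scal; apply cv_mult;
    apply (cv_S (zps _)); first [apply Kser_cv | apply Gser_cv]; auto. }
  symmetry. apply (cv_unique _ _ _ HR). apply (cv_zero_diff _ _ _ HS).
  assert (Hu : zbounded (fun m => Cmod (u m))) by (apply aco_zb; auto).
  assert (Hv : zbounded (fun m => Cmod (v m))) by (apply aco_zb; auto).
  destruct Hu as [Hu0 [BU HBU]] eqn:EU. destruct Hv as [Hv0 [BV HBV]] eqn:EV.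
  intros eps He.
  set (c := (BU + BV + 1)%R).
  assert (Hc : (0 < c)%R). { unfold c. pose proof (HBU 0%nat). pose proof (HBV 0%nat).
    assert (0 <= rzps (fun m => Cmod (u m)) 0)%R by (apply rsumL_nonneg; intros; auto).
    assert (0 <= rzps (fun m => Cmod (v m)) 0)%R by (apply rsumL_nonneg; intros; auto). lra. }
  destruct (rzps_cauchy (fun m => Cmod (u m)) (aco_zb p al Hp Hal) (eps / c)%R) as [K1 HK1]. apply Rdiv_lt_0_compat; lra.
  destruct (rzps_cauchy (fun m => Cmod (v m)) (aco_zb p be Hp Hbe) (eps / c)%R) as [K2 HK2]. apply Rdiv_lt_0_compat; lra.
  exists (K1 + K2)%nat. intros M HM.
  rewrite R_eq, S_eq. replace (sumL f (Lp M) - sumL f (box M) - 0) with (sumL f (Lp M) - sumL f (box M)) by ring.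
  eapply Rle_lt_trans. apply (sumL_incl_bound pair_dec f (box M) (Lp M) (box (2 * M + 3))).
  apply NoDup_box. apply NoDup_Lp. apply NoDup_box. apply incl_box_Lp. apply incl_Lp_box.
  rewrite !abs_eq.
  set (A1 := rzps (fun m => Cmod (u m)) (2 * M + 3)). set (A0 := rzps (fun m => Cmod (u m)) M).
  set (B1 := rzps (fun m => Cmod (v m)) (2 * M + 3)). set (B0 := rzps (fun m => Cmod (v m)) M).
  assert (A1 - A0 < eps / c)%R.
  { pose proof (HK1 (2 * M + 3)%nat ltac:(lia)). pose proof (rzps_mono _ Hu0 K1 M ltac:(lia)). unfold A1, A0. lra. }
  assert (B1 - B0 < eps / c)%R.
  { pose proof (HK2 (2 * M + 3)%nat ltac:(lia)). pose proof (rzps_mono _ Hv0 K2 M ltac:(lia)). unfold B1, B0. lra. }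
  assert (0 <= A1 - A0)%R by (pose proof (rzps_mono _ Hu0 M (2 * M + 3) ltac:(lia)); unfold A1, A0; lra).
  assert (0 <= B1 - B0)%R by (pose proof (rzps_mono _ Hv0 M (2 * M + 3) ltac:(lia)); unfold B1, B0; lra).
  assert (0 <= A0)%R by (apply rsumL_nonneg; intros; auto).
  assert (A0 <= BU)%R by apply HBU. assert (B1 <= BV)%R by apply HBV.
  assert (0 <= B1)%R by (apply rsumL_nonneg; intros; auto).
  replace (A1 * B1 - A0 * B0)%R with ((A1 - A0) * B1 + A0 * (B1 - B0))%R by ring.
  assert ((A1 - A0) * B1 <= eps / c * BV)%R by (apply Rmult_le_compat; lra).
  assert (A0 * (B1 - B0) <= BU * (eps / c))%R by (apply Rmult_le_compat; lra).
  assert (eps / c * BV + BU * (eps / c) < eps)%R.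
  { replace (eps / c * BV + BU * (eps / c))%R with (eps * ((BU + BV) / c))%R by (field; lra).
    assert ((BU + BV) / c < 1)%R. { apply (Rmult_lt_reg_r c). auto. unfold Rdiv. rewrite Rmult_assoc, Rinv_l by lra. unfold c. lra. }
    nra. }
  lra.
Qed.
End PF.

Lemma pair_theta (p al be s d : C) : (Cmod p < 1)%R -> al <> 0 -> be <> 0 -> s = al * be -> d = al / be ->
  theta al p * theta be p = / (qpoch_inf p p * qpoch_inf p p) * (s * Kser p s * Gser p d - al * Gser p s * Kser p d).
Proof.
  intros Hp Ha Hb -> ->. rewrite !theta_T by auto. rewrite <- (PF p al be) by auto.
  field. apply pp_lim_neq0; auto.
Qed.

Lemma star (p A B C D : C) : (Cmod p < 1)%R -> A <> 0 -> B <> 0 -> C <> 0 -> D <> 0 ->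
  D * (theta (A * D) p * theta (B / D) p * theta (C / D) p * theta (A * D / (B * C)) p)
  = theta A p * theta B p * theta C p * theta (A * D * D / (B * C)) p
    - theta D p * theta (A * D / B) p * theta (A * D / C) p * theta (B * C / D) p.
Proof.
  intros Hp HA HB HC HD.
  pose (SS := A * A * D * D / (B * C)). pose (uu := B * C). pose (vv := B / C). pose (ww := B * C / (D * D)).
  assert (HL : qpoch_inf p p <> 0) by (apply pp_lim_neq0; auto).
  assert (E1 : theta (A * D) p * theta (A * D / (B * C)) p = / (qpoch_inf p p * qpoch_inf p p) * (SS * Kser p SS * Gser p uu - A * D * Gser p SS * Kser p uu)).
  { apply pair_theta; auto. apply Cmult_neq_0; auto. repeat apply Cdiv_neq0; try apply Cmult_neq_0; auto.
    unfold SS; field; auto. unfold uu; field; auto. }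
  assert (E2 : theta (B / D) p * theta (C / D) p = / (qpoch_inf p p * qpoch_inf p p) * (ww * Kser p ww * Gser p vv - B / D * Gser p ww * Kser p vv)).
  { apply pair_theta; auto. apply Cdiv_neq0; auto. apply Cdiv_neq0; auto. unfold ww; field; auto. unfold vv; field; auto. }
  assert (E3 : theta A p * theta (A * D * D / (B * C)) p = / (qpoch_inf p p * qpoch_inf p p) * (SS * Kser p SS * Gser p ww - A * Gser p SS * Kser p ww)).
  { apply pair_theta; auto. apply Cdiv_neq0; repeat apply Cmult_neq_0; auto. unfold SS; field; auto. unfold ww; field; auto. }
  assert (E4 : theta B p * theta C p = / (qpoch_inf p p * qpoch_inf p p) * (uu * Kser p uu * Gser p vv - B * Gser p uu * Kser p vv)).
  { apply pair_theta; auto. }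
  assert (E5 : theta (B * C / D) p * theta D p = / (qpoch_inf p p * qpoch_inf p p) * (uu * Kser p uu * Gser p ww - B * C / D * Gser p uu * Kser p ww)).
  { apply pair_theta; auto. apply Cdiv_neq0; try apply Cmult_neq_0; auto. unfold uu; field; auto. unfold ww; field; auto. }
  assert (E6 : theta (A * D / C) p * theta (A * D / B) p = / (qpoch_inf p p * qpoch_inf p p) * (SS * Kser p SS * Gser p vv - A * D / C * Gser p SS * Kser p vv)).
  { apply pair_theta; auto. apply Cdiv_neq0; try apply Cmult_neq_0; auto. apply Cdiv_neq0; try apply Cmult_neq_0; auto.
    unfold SS; field; auto. unfold vv; field; auto. }
  transitivity (D * ((theta (A * D) p * theta (A * D / (B * C)) p) * (theta (B / D) p * theta (C / D) p))). ring.
  transitivity ((theta A p * theta (A * D * D / (B * C)) p) * (theta B p * theta C p)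
     - (theta (B * C / D) p * theta D p) * (theta (A * D / C) p * theta (A * D / B) p)).
  2: ring.
  rewrite E1, E2, E3, E4, E5, E6. unfold SS, uu, vv, ww. field. auto.
Qed.

Lemma C1_neq0 : RtoC 1 <> 0.
Proof. intro H. injection H. lra. Qed.

Ltac nz := repeat (first [ assumption | exact C1_neq0 | apply Cmult_neq_0 | apply Cdiv_neq0 | apply Cpow_neq0 | apply Cinv_neq0 ]).

Ltac pownorm := simpl Cpow; repeat (first [rewrite Cpow_div by nz | rewrite Cpow_mul]); rewrite ?Cpow_one.

Lemma theta_ext (x y p : C) : x = y -> theta x p = theta y p.
Proof. intros ->; auto. Qed.
Lemma ell_ext (x y q p : C) (k : nat) : x = y -> ell_poch x q p k = ell_poch y q p k.
Proof. intros ->; auto. Qed.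
Lemma ell_poch_S (x y p : C) (k : nat) : ell_poch x y p (S k) = ell_poch x y p k * theta (x * y ^ k) p.
Proof. reflexivity. Qed.
Lemma ell_poch_shift (x y p : C) (k : nat) : ell_poch x y p (S k) = theta x p * ell_poch (x * y) y p k.
Proof.
  induction k.
  - simpl. rewrite (theta_ext (x * 1) x) by ring. ring.
  - rewrite ell_poch_S, IHk, ell_poch_S. rewrite (theta_ext (x * y ^ S k) (x * y * y ^ k)) by (simpl; ring). ring.
Qed.
Lemma csum_S (f : nat -> C) (n : nat) : csum f (S n) = csum f n + f (S n).
Proof. reflexivity. Qed.

Lemma star' (p A B C D x1 x2 x3 x4 x5 x6 x7 x8 x9 x10 x11 x12 : C) : (Cmod p < 1)%R -> A <> 0 -> B <> 0 -> C <> 0 -> D <> 0 ->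
  x1 = A * D -> x2 = B / D -> x3 = C / D -> x4 = A * D / (B * C) -> x5 = A -> x6 = B -> x7 = C ->
  x8 = A * D * D / (B * C) -> x9 = D -> x10 = A * D / B -> x11 = A * D / C -> x12 = B * C / D ->
  D * (theta x1 p * theta x2 p * theta x3 p * theta x4 p)
  = theta x5 p * theta x6 p * theta x7 p * theta x8 p - theta x9 p * theta x10 p * theta x11 p * theta x12 p.
Proof. intros Hp HA HB HC HD -> -> -> -> -> -> -> -> -> -> -> ->. apply star; auto. Qed.

Lemma Cmult_nz_l (x y : C) : x * y <> 0 -> x <> 0.
Proof. intros H Hx. apply H. rewrite Hx. ring. Qed.
Lemma Cmult_nz_r (x y : C) : x * y <> 0 -> y <> 0.
Proof. intros H Hx. apply H. rewrite Hx. ring. Qed.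

Ltac split_nz H :=
  match type of H with
  | ?x * ?y <> _ =>
      let H1 := fresh "Hnz" in let H2 := fresh "Hnz" in
      pose proof (Cmult_nz_l x y H) as H1; pose proof (Cmult_nz_r x y H) as H2; clear H; split_nz H1; split_nz H2
  | _ => idtac
  end.

Theorem mainTheorem10 (p a b c d q r s t : C) (n : nat) :
  Cmod p < 1 ->
  a <> RtoC 0 -> b <> RtoC 0 -> c <> RtoC 0 -> d <> RtoC 0 ->
  q <> RtoC 0 -> r <> RtoC 0 -> s <> RtoC 0 -> t <> RtoC 0 ->
  (* well-definedness: all denominators are nonzero *)
  theta (a * d) p * theta (b / d) p * theta (c / d) p * theta (a * d / (b * c)) p
    <> RtoC 0 ->
  (forall k : nat, (k <= n)%nat ->
     ell_poch (d * q) q p k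
     * ell_poch (a * d * s * t / (b * q)) (s * t / q) p k
     * ell_poch (a * d * r * t / (c * q)) (r * t / q) p k
     * ell_poch (b * c * r * s / (d * q)) (r * s / q) p k <> RtoC 0) ->
  csum (fun k =>
      (theta (a * d * (r * s * t / q) ^ k) p
       * theta (b * r ^ k / (d * q ^ k)) p
       * theta (c * s ^ k / (d * q ^ k)) p
       * theta (a * d * t ^ k / (b * c * q ^ k)) p)
      / (theta (a * d) p * theta (b / d) p * theta (c / d) p
         * theta (a * d / (b * c)) p)
      * ((ell_poch a (r * s * t / q ^ 2) p k
          * ell_poch b r p k
          * ell_poch c s p k
          * ell_poch (a * d ^ 2 / (b * c)) t p k)
         / (ell_poch (d * q) q p k
            * ell_poch (a * d * s * t / (b * q)) (s * t / q) p k
            * ell_poch (a * d * r * t / (c * q)) (r * t / q) p k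
            * ell_poch (b * c * r * s / (d * q)) (r * s / q) p k))
      * q ^ k) n
  =
  (theta a p * theta b p * theta c p * theta (a * d ^ 2 / (b * c)) p)
    / (d * (theta (a * d) p * theta (b / d) p * theta (c / d) p
            * theta (a * d / (b * c)) p))
    * ((ell_poch (a * r * s * t / q ^ 2) (r * s * t / q ^ 2) p n
        * ell_poch (b * r) r p n
        * ell_poch (c * s) s p n
        * ell_poch (a * d ^ 2 * t / (b * c)) t p n)
       / (ell_poch (d * q) q p n
          * ell_poch (a * d * s * t / (b * q)) (s * t / q) p n
          * ell_poch (a * d * r * t / (c * q)) (r * t / q) p n
          * ell_poch (b * c * r * s / (d * q)) (r * s / q) p n))
  - (theta d p * theta (a * d / b) p * theta (a * d / c) p * theta (b * c / d) p)
    / (d * (theta (a * d) p * theta (b / d) p * theta (c / d) p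
            * theta (a * d / (b * c)) p)).
Proof.
  Opaque theta.
  intros Hp Ha Hb Hc Hd Hq Hr Hs Ht HTh HDen.
  pose proof (Cmult_nz_r _ _ HTh) as HT4. apply Cmult_nz_l in HTh.
  pose proof (Cmult_nz_r _ _ HTh) as HT3. apply Cmult_nz_l in HTh.
  pose proof (Cmult_nz_r _ _ HTh) as HT2. apply Cmult_nz_l in HTh. rename HTh into HT1.
  revert HDen. induction n as [|n IH]; intros HDen.
  -
    simpl csum. simpl ell_poch.
    rewrite (theta_ext (a * d * (r * s * t / q) ^ 0) (a * d)) by (simpl; ring).
    rewrite (theta_ext (b * r ^ 0 / (d * q ^ 0)) (b / d)) by (simpl; field; repeat split; nz).
    rewrite (theta_ext (c * s ^ 0 / (d * q ^ 0)) (c / d)) by (simpl; field; repeat split; nz).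
    rewrite (theta_ext (a * d * t ^ 0 / (b * c * q ^ 0)) (a * d / (b * c))) by (simpl; field; repeat split; nz).
    assert (X := star' p a b c d (a * d) (b / d) (c / d) (a * d / (b * c)) a b c (a * d ^ 2 / (b * c)) d (a * d / b) (a * d / c) (b * c / d)
       Hp Ha Hb Hc Hd eq_refl eq_refl eq_refl eq_refl eq_refl eq_refl eq_refl ltac:(simpl; field; repeat split; nz) eq_refl eq_refl eq_refl eq_refl).
    change (q ^ 0) with (RtoC 1).
    assert (XA : theta a p * theta b p * theta c p * theta (a * d ^ 2 / (b * c)) p =
      d * (theta (a * d) p * theta (b / d) p * theta (c / d) p * theta (a * d / (b * c)) p)
      + theta d p * theta (a * d / b) p * theta (a * d / c) p * theta (b * c / d) p) by (rewrite X; ring).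
    rewrite XA. field. repeat split; nz. idtac.
  - Show. rewrite csum_S. rewrite IH by (intros; apply HDen; lia). cbv beta.
    rewrite (ell_poch_shift a (r * s * t / q ^ 2) p n), (ell_poch_shift b r p n), (ell_poch_shift c s p n),
      (ell_poch_shift (a * d ^ 2 / (b * c)) t p n).
    rewrite (ell_ext (a * (r * s * t / q ^ 2)) (a * r * s * t / q ^ 2)) by (field; repeat split; nz).
    rewrite (ell_ext (a * d ^ 2 / (b * c) * t) (a * d ^ 2 * t / (b * c))) by (field; repeat split; nz).
    rewrite !ell_poch_S.
    pose proof (HDen n ltac:(lia)) as HDn. pose proof (HDen (S n) ltac:(lia)) as HDS. rewrite !ell_poch_S in HDS.
    assert (X := star' p (a * r * s * t / q ^ 2 * (r * s * t / q ^ 2) ^ n) (b * r * r ^ n) (c * s * s ^ n) (d * q * q ^ n)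
      (a * d * (r * s * t / q) ^ S n) (b * r ^ S n / (d * q ^ S n)) (c * s ^ S n / (d * q ^ S n))
      (a * d * t ^ S n / (b * c * q ^ S n)) (a * r * s * t / q ^ 2 * (r * s * t / q ^ 2) ^ n) (b * r * r ^ n) (c * s * s ^ n)
      (a * d ^ 2 * t / (b * c) * t ^ n) (d * q * q ^ n) (a * d * s * t / (b * q) * (s * t / q) ^ n)
      (a * d * r * t / (c * q) * (r * t / q) ^ n) (b * c * r * s / (d * q) * (r * s / q) ^ n) Hp
      ltac:(nz) ltac:(nz) ltac:(nz) ltac:(nz)
      ltac:(pownorm; field; repeat split; nz) ltac:(pownorm; field; repeat split; nz) ltac:(pownorm; field; repeat split; nz)
      ltac:(pownorm; field; repeat split; nz) eq_refl eq_refl eq_refl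
      ltac:(pownorm; field; repeat split; nz) eq_refl ltac:(pownorm; field; repeat split; nz)
      ltac:(pownorm; field; repeat split; nz) ltac:(pownorm; field; repeat split; nz)).
    split_nz HDn. split_nz HDS.
    change (q ^ S n) with (q * q ^ n) in *.
    assert (HQ : q ^ n <> 0) by nz.
    set (T1 := theta (a * d * (r * s * t / q) ^ S n) p) in *.
    set (T2 := theta (b * r ^ S n / (d * (q * q ^ n))) p) in *.
    set (T3 := theta (c * s ^ S n / (d * (q * q ^ n))) p) in *.
    set (T4 := theta (a * d * t ^ S n / (b * c * (q * q ^ n))) p) in *.
    set (H1 := theta (a * d) p) in *. set (H2 := theta (b / d) p) in *. set (H3 := theta (c / d) p) in *.
    set (H4 := theta (a * d / (b * c)) p) in *.
    set (P1 := theta a p) in *. set (P2 := theta b p) in *. set (P3 := theta c p) in *. set (P4 := theta (a * d ^ 2 / (b * c)) p) in *.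
    set (Y1 := theta d p) in *. set (Y2 := theta (a * d / b) p) in *. set (Y3 := theta (a * d / c) p) in *. set (Y4 := theta (b * c / d) p) in *.
    set (e1 := ell_poch (d * q) q p n) in *. set (e2 := ell_poch (a * d * s * t / (b * q)) (s * t / q) p n) in *.
    set (e3 := ell_poch (a * d * r * t / (c * q)) (r * t / q) p n) in *. set (e4 := ell_poch (b * c * r * s / (d * q)) (r * s / q) p n) in *.
    set (n1 := ell_poch (a * r * s * t / q ^ 2) (r * s * t / q ^ 2) p n) in *. set (n2 := ell_poch (b * r) r p n) in *.
    set (n3 := ell_poch (c * s) s p n) in *. set (n4 := ell_poch (a * d ^ 2 * t / (b * c)) t p n) in *.
    set (d1 := theta (d * q * q ^ n) p) in *. set (d2 := theta (a * d * s * t / (b * q) * (s * t / q) ^ n) p) in *.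
    set (d3 := theta (a * d * r * t / (c * q) * (r * t / q) ^ n) p) in *. set (d4 := theta (b * c * r * s / (d * q) * (r * s / q) ^ n) p) in *.
    set (v1 := theta (a * r * s * t / q ^ 2 * (r * s * t / q ^ 2) ^ n) p) in *. set (v2 := theta (b * r * r ^ n) p) in *.
    set (v3 := theta (c * s * s ^ n) p) in *. set (v4 := theta (a * d ^ 2 * t / (b * c) * t ^ n) p) in *.
    set (Q := q ^ n) in *.
    clearbody T1 T2 T3 T4 H1 H2 H3 H4 P1 P2 P3 P4 Y1 Y2 Y3 Y4 e1 e2 e3 e4 n1 n2 n3 n4 d1 d2 d3 d4 v1 v2 v3 v4 Q.
    assert (Hv : v1 * v2 * v3 * v4 = d * q * Q * (T1 * T2 * T3 * T4) + d1 * d2 * d3 * d4) by (rewrite X; ring).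
    transitivity (P1 * P2 * P3 * P4 / (d * (H1 * H2 * H3 * H4)) * ((n1 * n2 * n3 * n4) * (v1 * v2 * v3 * v4)) / ((e1 * e2 * e3 * e4) * (d1 * d2 * d3 * d4))
      - Y1 * Y2 * Y3 * Y4 / (d * (H1 * H2 * H3 * H4))).
    2: field; repeat split; nz.
    rewrite Hv. field. repeat split; nz.
Qed.
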